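(* For every integer $k\ge 2$, the $2$-full words of $\mathcal W^2_{(3k+2)\times 5}$ are unique up to symmetry: any two of them are obtained from one another by reflection across the horizontal axis, reflection across the vertical axis, or their composition.
   Context: A 2-dimensional binary word of dimensions $h\times w$ is an $h\times w$ matrix with entries in $\{\square,\blacksquare\}$ (filled cells $\blacksquare$, empty cells $\square$). Two cells $(i,j),(i',j')$ are adjacent if $|i-i'|+|j-j'|=1$; the degree of a filled cell is the number of filled cells adjacent to it. $\mathcal W^2_{h\times w}$ is the set of $h\times w$ binary words in which every filled cell has degree at most $2$; $W$ is $2$-full if its number of filled cells is maximal in $\mathcal W^2_{h\times w}$. *)

(* Defs.v *)
From mathcomp Require Import all_boot all_order all_algebra.
Set Implicit Arguments. Unset Strict Implicit. Unset Printing Implicit Defensive.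
Local Open Scope ring_scope.

(* A 2-dimensional binary word of dimensions h x w: an h x w matrix over bool,
   true = filled cell, false = empty cell. *)
Definition word (h w : nat) := 'M[bool]_(h, w).

Definition adjacent (h w : nat) (c d : 'I_h * 'I_w) : bool :=
  ((c.1 == d.1 :> nat) && ((c.2.+1 == d.2 :> nat) || (d.2.+1 == c.2 :> nat)))
  || ((c.2 == d.2 :> nat) && ((c.1.+1 == d.1 :> nat) || (d.1.+1 == c.1 :> nat))).

Definition degree (h w : nat) (W : word h w) (c : 'I_h * 'I_w) : nat :=
  #|[set d : 'I_h * 'I_w | adjacent c d && W d.1 d.2]|.

Definition nfilled (h w : nat) (W : word h w) : nat :=
  #|[set c : 'I_h * 'I_w | W c.1 c.2]|.

Definition inW2 (h w : nat) (W : word h w) : bool :=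
  [forall c : 'I_h * 'I_w, W c.1 c.2 ==> (degree W c <= 2)%N].

Definition two_full (h w : nat) (W : word h w) : Prop :=
  inW2 W /\ forall V : word h w, inW2 V -> (nfilled V <= nfilled W)%N.

Definition reflH (h w : nat) (W : word h w) : word h w :=
  \matrix_(i, j) W (rev_ord i) j.

Definition reflV (h w : nat) (W : word h w) : word h w :=
  \matrix_(i, j) W i (rev_ord j).

(* Main.v *)
Require Import Defs.
From mathcomp Require Import all_boot all_order all_algebra.
From mathcomp Require Import zify.
Set Implicit Arguments. Unset Strict Implicit. Unset Printing Implicit Defensive.

Definition bit (x j : nat) : bool := odd (x %/ 2 ^ j).
Definition pc x : nat := bit x 0 + bit x 1 + bit x 2 + bit x 3 + bit x 4.
Definition ok3 a b c := all (fun j => ~~ bit b j || (bit a j + bit c j + (if j is j'.+1 then bit b j' else false) + bit b j.+1 <= 2)) (iota 0 5).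
Definition PT : seq (seq (seq nat)) := [:: [:: [:: 20; 20; 20; 20; 20; 20; 20; 20; 20; 20; 20; 20; 20; 20; 20; 20; 20; 20; 20; 20; 20; 20; 20; 20; 20; 20; 20; 20; 20; 20; 20; 20];
  [:: 0; 0; 0; 0; 0; 0; 0; 0; 0; 0; 0; 0; 0; 0; 0; 0; 0; 0; 0; 0; 0; 0; 0; 0; 0; 0; 0; 0; 0; 0; 0; 0];
  [:: 0; 0; 0; 0; 0; 0; 0; 0; 0; 0; 0; 0; 0; 0; 0; 0; 0; 0; 0; 0; 0; 0; 0; 0; 0; 0; 0; 0; 0; 0; 0; 0];
  [:: 0; 0; 0; 0; 0; 0; 0; 0; 0; 0; 0; 0; 0; 0; 0; 0; 0; 0; 0; 0; 0; 0; 0; 0; 0; 0; 0; 0; 0; 0; 0; 0];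
  [:: 0; 0; 0; 0; 0; 0; 0; 0; 0; 0; 0; 0; 0; 0; 0; 0; 0; 0; 0; 0; 0; 0; 0; 0; 0; 0; 0; 0; 0; 0; 0; 0];
  [:: 0; 0; 0; 0; 0; 0; 0; 0; 0; 0; 0; 0; 0; 0; 0; 0; 0; 0; 0; 0; 0; 0; 0; 0; 0; 0; 0; 0; 0; 0; 0; 0];
  [:: 0; 0; 0; 0; 0; 0; 0; 0; 0; 0; 0; 0; 0; 0; 0; 0; 0; 0; 0; 0; 0; 0; 0; 0; 0; 0; 0; 0; 0; 0; 0; 0];
  [:: 0; 0; 0; 0; 0; 0; 0; 0; 0; 0; 0; 0; 0; 0; 0; 0; 0; 0; 0; 0; 0; 0; 0; 0; 0; 0; 0; 0; 0; 0; 0; 0];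
  [:: 0; 0; 0; 0; 0; 0; 0; 0; 0; 0; 0; 0; 0; 0; 0; 0; 0; 0; 0; 0; 0; 0; 0; 0; 0; 0; 0; 0; 0; 0; 0; 0];
  [:: 0; 0; 0; 0; 0; 0; 0; 0; 0; 0; 0; 0; 0; 0; 0; 0; 0; 0; 0; 0; 0; 0; 0; 0; 0; 0; 0; 0; 0; 0; 0; 0];
  [:: 0; 0; 0; 0; 0; 0; 0; 0; 0; 0; 0; 0; 0; 0; 0; 0; 0; 0; 0; 0; 0; 0; 0; 0; 0; 0; 0; 0; 0; 0; 0; 0];
  [:: 0; 0; 0; 0; 0; 0; 0; 0; 0; 0; 0; 0; 0; 0; 0; 0; 0; 0; 0; 0; 0; 0; 0; 0; 0; 0; 0; 0; 0; 0; 0; 0];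
  [:: 0; 0; 0; 0; 0; 0; 0; 0; 0; 0; 0; 0; 0; 0; 0; 0; 0; 0; 0; 0; 0; 0; 0; 0; 0; 0; 0; 0; 0; 0; 0; 0];
  [:: 0; 0; 0; 0; 0; 0; 0; 0; 0; 0; 0; 0; 0; 0; 0; 0; 0; 0; 0; 0; 0; 0; 0; 0; 0; 0; 0; 0; 0; 0; 0; 0];
  [:: 0; 0; 0; 0; 0; 0; 0; 0; 0; 0; 0; 0; 0; 0; 0; 0; 0; 0; 0; 0; 0; 0; 0; 0; 0; 0; 0; 0; 0; 0; 0; 0];
  [:: 0; 0; 0; 0; 0; 0; 0; 0; 0; 0; 0; 0; 0; 0; 0; 0; 0; 0; 0; 0; 0; 0; 0; 0; 0; 0; 0; 0; 0; 0; 0; 0];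
  [:: 0; 0; 0; 0; 0; 0; 0; 0; 0; 0; 0; 0; 0; 0; 0; 0; 0; 0; 0; 0; 0; 0; 0; 0; 0; 0; 0; 0; 0; 0; 0; 0];
  [:: 0; 0; 0; 0; 0; 0; 0; 0; 0; 0; 0; 0; 0; 0; 0; 0; 0; 0; 0; 0; 0; 0; 0; 0; 0; 0; 0; 0; 0; 0; 0; 0];
  [:: 0; 0; 0; 0; 0; 0; 0; 0; 0; 0; 0; 0; 0; 0; 0; 0; 0; 0; 0; 0; 0; 0; 0; 0; 0; 0; 0; 0; 0; 0; 0; 0];
  [:: 0; 0; 0; 0; 0; 0; 0; 0; 0; 0; 0; 0; 0; 0; 0; 0; 0; 0; 0; 0; 0; 0; 0; 0; 0; 0; 0; 0; 0; 0; 0; 0];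
  [:: 0; 0; 0; 0; 0; 0; 0; 0; 0; 0; 0; 0; 0; 0; 0; 0; 0; 0; 0; 0; 0; 0; 0; 0; 0; 0; 0; 0; 0; 0; 0; 0];
  [:: 0; 0; 0; 0; 0; 0; 0; 0; 0; 0; 0; 0; 0; 0; 0; 0; 0; 0; 0; 0; 0; 0; 0; 0; 0; 0; 0; 0; 0; 0; 0; 0];
  [:: 0; 0; 0; 0; 0; 0; 0; 0; 0; 0; 0; 0; 0; 0; 0; 0; 0; 0; 0; 0; 0; 0; 0; 0; 0; 0; 0; 0; 0; 0; 0; 0];
  [:: 0; 0; 0; 0; 0; 0; 0; 0; 0; 0; 0; 0; 0; 0; 0; 0; 0; 0; 0; 0; 0; 0; 0; 0; 0; 0; 0; 0; 0; 0; 0; 0];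
  [:: 0; 0; 0; 0; 0; 0; 0; 0; 0; 0; 0; 0; 0; 0; 0; 0; 0; 0; 0; 0; 0; 0; 0; 0; 0; 0; 0; 0; 0; 0; 0; 0];
  [:: 0; 0; 0; 0; 0; 0; 0; 0; 0; 0; 0; 0; 0; 0; 0; 0; 0; 0; 0; 0; 0; 0; 0; 0; 0; 0; 0; 0; 0; 0; 0; 0];
  [:: 0; 0; 0; 0; 0; 0; 0; 0; 0; 0; 0; 0; 0; 0; 0; 0; 0; 0; 0; 0; 0; 0; 0; 0; 0; 0; 0; 0; 0; 0; 0; 0];
  [:: 0; 0; 0; 0; 0; 0; 0; 0; 0; 0; 0; 0; 0; 0; 0; 0; 0; 0; 0; 0; 0; 0; 0; 0; 0; 0; 0; 0; 0; 0; 0; 0];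
  [:: 0; 0; 0; 0; 0; 0; 0; 0; 0; 0; 0; 0; 0; 0; 0; 0; 0; 0; 0; 0; 0; 0; 0; 0; 0; 0; 0; 0; 0; 0; 0; 0];
  [:: 0; 0; 0; 0; 0; 0; 0; 0; 0; 0; 0; 0; 0; 0; 0; 0; 0; 0; 0; 0; 0; 0; 0; 0; 0; 0; 0; 0; 0; 0; 0; 0];
  [:: 0; 0; 0; 0; 0; 0; 0; 0; 0; 0; 0; 0; 0; 0; 0; 0; 0; 0; 0; 0; 0; 0; 0; 0; 0; 0; 0; 0; 0; 0; 0; 0];
  [:: 0; 0; 0; 0; 0; 0; 0; 0; 0; 0; 0; 0; 0; 0; 0; 0; 0; 0; 0; 0; 0; 0; 0; 0; 0; 0; 0; 0; 0; 0; 0; 0]];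
 [:: [:: 10; 10; 10; 10; 10; 10; 10; 10; 10; 10; 10; 10; 10; 10; 10; 10; 10; 10; 10; 10; 10; 10; 10; 10; 10; 10; 10; 10; 10; 10; 10; 10];
  [:: 13; 13; 13; 13; 13; 13; 13; 13; 13; 13; 13; 13; 13; 13; 13; 13; 13; 13; 13; 13; 13; 13; 13; 13; 13; 13; 13; 13; 13; 13; 13; 13];
  [:: 13; 13; 13; 13; 13; 13; 13; 13; 13; 13; 13; 13; 13; 13; 13; 13; 13; 13; 13; 13; 13; 13; 13; 13; 13; 13; 13; 13; 13; 13; 13; 13];
  [:: 16; 16; 16; 16; 16; 16; 16; 16; 16; 16; 16; 16; 16; 16; 16; 16; 16; 16; 16; 16; 16; 16; 16; 16; 16; 16; 16; 16; 16; 16; 16; 16];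
  [:: 13; 13; 13; 13; 13; 13; 13; 13; 13; 13; 13; 13; 13; 13; 13; 13; 13; 13; 13; 13; 13; 13; 13; 13; 13; 13; 13; 13; 13; 13; 13; 13];
  [:: 16; 16; 16; 16; 16; 16; 16; 16; 16; 16; 16; 16; 16; 16; 16; 16; 16; 16; 16; 16; 16; 16; 16; 16; 16; 16; 16; 16; 16; 16; 16; 16];
  [:: 16; 16; 16; 16; 16; 16; 16; 16; 16; 16; 16; 16; 16; 16; 16; 16; 16; 16; 16; 16; 16; 16; 16; 16; 16; 16; 16; 16; 16; 16; 16; 16];
  [:: 19; 19; 0; 0; 19; 19; 0; 0; 19; 19; 0; 0; 19; 19; 0; 0; 19; 19; 0; 0; 19; 19; 0; 0; 19; 19; 0; 0; 19; 19; 0; 0];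
  [:: 13; 13; 13; 13; 13; 13; 13; 13; 13; 13; 13; 13; 13; 13; 13; 13; 13; 13; 13; 13; 13; 13; 13; 13; 13; 13; 13; 13; 13; 13; 13; 13];
  [:: 16; 16; 16; 16; 16; 16; 16; 16; 16; 16; 16; 16; 16; 16; 16; 16; 16; 16; 16; 16; 16; 16; 16; 16; 16; 16; 16; 16; 16; 16; 16; 16];
  [:: 16; 16; 16; 16; 16; 16; 16; 16; 16; 16; 16; 16; 16; 16; 16; 16; 16; 16; 16; 16; 16; 16; 16; 16; 16; 16; 16; 16; 16; 16; 16; 16];
  [:: 19; 19; 19; 19; 19; 19; 19; 19; 19; 19; 19; 19; 19; 19; 19; 19; 19; 19; 19; 19; 19; 19; 19; 19; 19; 19; 19; 19; 19; 19; 19; 19];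
  [:: 16; 16; 16; 16; 16; 16; 16; 16; 16; 16; 16; 16; 16; 16; 16; 16; 16; 16; 16; 16; 16; 16; 16; 16; 16; 16; 16; 16; 16; 16; 16; 16];
  [:: 19; 19; 19; 19; 19; 19; 19; 19; 19; 19; 19; 19; 19; 19; 19; 19; 19; 19; 19; 19; 19; 19; 19; 19; 19; 19; 19; 19; 19; 19; 19; 19];
  [:: 19; 19; 19; 19; 0; 0; 0; 0; 19; 19; 19; 19; 0; 0; 0; 0; 19; 19; 19; 19; 0; 0; 0; 0; 19; 19; 19; 19; 0; 0; 0; 0];
  [:: 22; 22; 0; 0; 0; 0; 0; 0; 22; 22; 0; 0; 0; 0; 0; 0; 22; 22; 0; 0; 0; 0; 0; 0; 22; 22; 0; 0; 0; 0; 0; 0];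
  [:: 13; 13; 13; 13; 13; 13; 13; 13; 13; 13; 13; 13; 13; 13; 13; 13; 13; 13; 13; 13; 13; 13; 13; 13; 13; 13; 13; 13; 13; 13; 13; 13];
  [:: 16; 16; 16; 16; 16; 16; 16; 16; 16; 16; 16; 16; 16; 16; 16; 16; 16; 16; 16; 16; 16; 16; 16; 16; 16; 16; 16; 16; 16; 16; 16; 16];
  [:: 16; 16; 16; 16; 16; 16; 16; 16; 16; 16; 16; 16; 16; 16; 16; 16; 16; 16; 16; 16; 16; 16; 16; 16; 16; 16; 16; 16; 16; 16; 16; 16];
  [:: 19; 19; 19; 19; 19; 19; 19; 19; 19; 19; 19; 19; 19; 19; 19; 19; 19; 19; 19; 19; 19; 19; 19; 19; 19; 19; 19; 19; 19; 19; 19; 19];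
  [:: 16; 16; 16; 16; 16; 16; 16; 16; 16; 16; 16; 16; 16; 16; 16; 16; 16; 16; 16; 16; 16; 16; 16; 16; 16; 16; 16; 16; 16; 16; 16; 16];
  [:: 19; 19; 19; 19; 19; 19; 19; 19; 19; 19; 19; 19; 19; 19; 19; 19; 19; 19; 19; 19; 19; 19; 19; 19; 19; 19; 19; 19; 19; 19; 19; 19];
  [:: 19; 19; 19; 19; 19; 19; 19; 19; 19; 19; 19; 19; 19; 19; 19; 19; 19; 19; 19; 19; 19; 19; 19; 19; 19; 19; 19; 19; 19; 19; 19; 19];
  [:: 22; 22; 0; 0; 22; 22; 0; 0; 22; 22; 0; 0; 22; 22; 0; 0; 22; 22; 0; 0; 22; 22; 0; 0; 22; 22; 0; 0; 22; 22; 0; 0];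
  [:: 16; 16; 16; 16; 16; 16; 16; 16; 16; 16; 16; 16; 16; 16; 16; 16; 16; 16; 16; 16; 16; 16; 16; 16; 16; 16; 16; 16; 16; 16; 16; 16];
  [:: 19; 19; 19; 19; 19; 19; 19; 19; 19; 19; 19; 19; 19; 19; 19; 19; 19; 19; 19; 19; 19; 19; 19; 19; 19; 19; 19; 19; 19; 19; 19; 19];
  [:: 19; 19; 19; 19; 19; 19; 19; 19; 19; 19; 19; 19; 19; 19; 19; 19; 19; 19; 19; 19; 19; 19; 19; 19; 19; 19; 19; 19; 19; 19; 19; 19];
  [:: 22; 22; 22; 22; 22; 22; 22; 22; 22; 22; 22; 22; 22; 22; 22; 22; 22; 22; 22; 22; 22; 22; 22; 22; 22; 22; 22; 22; 22; 22; 22; 22];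
  [:: 19; 19; 19; 19; 19; 19; 19; 19; 0; 0; 0; 0; 0; 0; 0; 0; 19; 19; 19; 19; 19; 19; 19; 19; 0; 0; 0; 0; 0; 0; 0; 0];
  [:: 22; 22; 22; 22; 22; 22; 22; 22; 0; 0; 0; 0; 0; 0; 0; 0; 22; 22; 22; 22; 22; 22; 22; 22; 0; 0; 0; 0; 0; 0; 0; 0];
  [:: 22; 22; 22; 22; 0; 0; 0; 0; 0; 0; 0; 0; 0; 0; 0; 0; 22; 22; 22; 22; 0; 0; 0; 0; 0; 0; 0; 0; 0; 0; 0; 0];
  [:: 25; 25; 0; 0; 0; 0; 0; 0; 0; 0; 0; 0; 0; 0; 0; 0; 25; 25; 0; 0; 0; 0; 0; 0; 0; 0; 0; 0; 0; 0; 0; 0]];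
 [:: [:: 15; 15; 15; 15; 15; 15; 15; 15; 15; 15; 15; 15; 15; 15; 15; 15; 15; 15; 15; 15; 15; 15; 15; 15; 15; 15; 15; 15; 15; 15; 15; 15];
  [:: 18; 18; 18; 18; 18; 18; 18; 18; 18; 18; 18; 18; 18; 18; 18; 18; 18; 18; 18; 18; 18; 18; 18; 18; 18; 18; 18; 18; 18; 18; 18; 18];
  [:: 15; 15; 15; 15; 15; 15; 15; 15; 15; 15; 15; 15; 15; 15; 15; 15; 15; 15; 15; 15; 15; 15; 15; 15; 15; 15; 15; 15; 15; 15; 15; 15];
  [:: 18; 18; 18; 15; 18; 18; 18; 15; 18; 18; 18; 15; 18; 18; 18; 15; 18; 18; 18; 15; 18; 18; 18; 15; 18; 18; 18; 15; 18; 18; 18; 15];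
  [:: 15; 15; 15; 15; 15; 15; 15; 15; 15; 15; 15; 15; 15; 15; 15; 15; 15; 15; 15; 15; 15; 15; 15; 15; 15; 15; 15; 15; 15; 15; 15; 15];
  [:: 18; 18; 18; 18; 18; 18; 18; 18; 18; 18; 18; 18; 18; 18; 18; 18; 18; 18; 18; 18; 18; 18; 18; 18; 18; 18; 18; 18; 18; 18; 18; 18];
  [:: 18; 18; 18; 18; 18; 18; 15; 15; 18; 18; 18; 18; 18; 18; 15; 15; 18; 18; 18; 18; 18; 18; 15; 15; 18; 18; 18; 18; 18; 18; 15; 15];
  [:: 21; 18; 0; 0; 18; 15; 0; 0; 21; 18; 0; 0; 18; 15; 0; 0; 21; 18; 0; 0; 18; 15; 0; 0; 21; 18; 0; 0; 18; 15; 0; 0];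
  [:: 15; 15; 15; 15; 15; 15; 15; 15; 15; 15; 15; 15; 15; 15; 15; 15; 15; 15; 15; 15; 15; 15; 15; 15; 15; 15; 15; 15; 15; 15; 15; 15];
  [:: 18; 18; 18; 18; 18; 18; 18; 18; 18; 18; 18; 18; 18; 18; 18; 18; 18; 18; 18; 18; 18; 18; 18; 18; 18; 18; 18; 18; 18; 18; 18; 18];
  [:: 18; 18; 18; 18; 18; 18; 18; 18; 18; 18; 18; 18; 18; 18; 18; 18; 18; 18; 18; 18; 18; 18; 18; 18; 18; 18; 18; 18; 18; 18; 18; 18];
  [:: 21; 18; 18; 15; 21; 18; 18; 15; 21; 18; 18; 15; 21; 18; 18; 15; 21; 18; 18; 15; 21; 18; 18; 15; 21; 18; 18; 15; 21; 18; 18; 15];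
  [:: 18; 18; 18; 18; 18; 18; 18; 18; 18; 18; 18; 18; 15; 15; 15; 15; 18; 18; 18; 18; 18; 18; 18; 18; 18; 18; 18; 18; 15; 15; 15; 15];
  [:: 21; 21; 21; 21; 21; 21; 21; 21; 21; 21; 21; 21; 18; 18; 18; 18; 21; 21; 21; 21; 21; 21; 21; 21; 21; 21; 21; 21; 18; 18; 18; 18];
  [:: 21; 21; 18; 18; 0; 0; 0; 0; 18; 18; 15; 15; 0; 0; 0; 0; 21; 21; 18; 18; 0; 0; 0; 0; 18; 18; 15; 15; 0; 0; 0; 0];
  [:: 21; 18; 0; 0; 0; 0; 0; 0; 18; 15; 0; 0; 0; 0; 0; 0; 21; 18; 0; 0; 0; 0; 0; 0; 18; 15; 0; 0; 0; 0; 0; 0];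
  [:: 18; 18; 18; 18; 18; 18; 18; 18; 18; 18; 18; 18; 18; 18; 18; 18; 18; 18; 18; 18; 18; 18; 18; 18; 18; 18; 18; 18; 18; 18; 18; 18];
  [:: 21; 21; 21; 21; 21; 21; 21; 21; 21; 21; 21; 21; 21; 21; 21; 21; 21; 21; 21; 21; 21; 21; 21; 21; 21; 21; 21; 21; 21; 21; 21; 21];
  [:: 18; 18; 18; 18; 18; 18; 18; 18; 18; 18; 18; 18; 18; 18; 18; 18; 18; 18; 18; 18; 18; 18; 18; 18; 18; 18; 18; 18; 18; 18; 18; 18];
  [:: 21; 21; 21; 18; 21; 21; 21; 18; 21; 21; 21; 18; 21; 21; 21; 18; 21; 21; 21; 18; 21; 21; 21; 18; 21; 21; 21; 18; 21; 21; 21; 18];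
  [:: 18; 18; 18; 18; 18; 18; 18; 18; 18; 18; 18; 18; 18; 18; 18; 18; 18; 18; 18; 18; 18; 18; 18; 18; 18; 18; 18; 18; 18; 18; 18; 18];
  [:: 21; 21; 21; 21; 21; 21; 21; 21; 21; 21; 21; 21; 21; 21; 21; 21; 21; 21; 21; 21; 21; 21; 21; 21; 21; 21; 21; 21; 21; 21; 21; 21];
  [:: 21; 21; 21; 21; 21; 21; 18; 18; 21; 21; 21; 21; 21; 21; 18; 18; 21; 21; 21; 21; 21; 21; 18; 18; 21; 21; 21; 21; 21; 21; 18; 18];
  [:: 24; 21; 0; 0; 21; 18; 0; 0; 24; 21; 0; 0; 21; 18; 0; 0; 24; 21; 0; 0; 21; 18; 0; 0; 24; 21; 0; 0; 21; 18; 0; 0];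
  [:: 18; 18; 18; 18; 18; 18; 18; 18; 18; 18; 18; 18; 18; 18; 18; 18; 18; 18; 18; 18; 18; 18; 18; 18; 15; 15; 15; 15; 15; 15; 15; 15];
  [:: 21; 21; 21; 21; 21; 21; 21; 21; 21; 21; 21; 21; 21; 21; 21; 21; 21; 21; 21; 21; 21; 21; 21; 21; 18; 18; 18; 18; 18; 18; 18; 18];
  [:: 21; 21; 21; 21; 21; 21; 21; 21; 18; 18; 18; 18; 18; 18; 18; 18; 18; 18; 18; 18; 18; 18; 18; 18; 15; 15; 15; 15; 15; 15; 15; 15];
  [:: 24; 21; 21; 18; 24; 21; 21; 18; 21; 21; 21; 18; 21; 21; 21; 18; 21; 21; 21; 18; 21; 21; 21; 18; 18; 18; 18; 15; 18; 18; 18; 15];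
  [:: 21; 21; 21; 21; 18; 18; 18; 18; 0; 0; 0; 0; 0; 0; 0; 0; 18; 18; 18; 18; 15; 15; 15; 15; 0; 0; 0; 0; 0; 0; 0; 0];
  [:: 24; 24; 24; 24; 21; 21; 21; 21; 0; 0; 0; 0; 0; 0; 0; 0; 21; 21; 21; 21; 18; 18; 18; 18; 0; 0; 0; 0; 0; 0; 0; 0];
  [:: 21; 21; 18; 18; 0; 0; 0; 0; 0; 0; 0; 0; 0; 0; 0; 0; 18; 18; 15; 15; 0; 0; 0; 0; 0; 0; 0; 0; 0; 0; 0; 0];
  [:: 21; 18; 0; 0; 0; 0; 0; 0; 0; 0; 0; 0; 0; 0; 0; 0; 18; 15; 0; 0; 0; 0; 0; 0; 0; 0; 0; 0; 0; 0; 0; 0]];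
 [:: [:: 14; 14; 14; 14; 14; 14; 14; 14; 14; 14; 14; 14; 14; 14; 14; 14; 14; 14; 14; 14; 14; 14; 14; 14; 14; 14; 14; 14; 14; 14; 14; 14];
  [:: 17; 17; 17; 17; 17; 17; 17; 17; 17; 17; 17; 17; 17; 17; 17; 17; 17; 17; 17; 17; 17; 17; 17; 17; 17; 17; 17; 17; 17; 17; 17; 17];
  [:: 17; 17; 17; 17; 17; 17; 17; 17; 17; 17; 17; 17; 17; 17; 17; 17; 17; 17; 17; 17; 17; 17; 17; 17; 17; 17; 17; 17; 17; 17; 17; 17];
  [:: 20; 17; 20; 17; 20; 17; 20; 17; 20; 17; 20; 17; 20; 17; 20; 17; 20; 17; 20; 17; 20; 17; 20; 17; 20; 17; 20; 17; 20; 17; 20; 17];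
  [:: 17; 17; 17; 17; 17; 17; 17; 17; 17; 17; 17; 17; 17; 17; 17; 17; 17; 17; 17; 17; 17; 17; 17; 17; 17; 17; 17; 17; 17; 17; 17; 17];
  [:: 17; 17; 17; 17; 17; 17; 17; 17; 17; 17; 17; 17; 17; 17; 17; 17; 17; 17; 17; 17; 17; 17; 17; 17; 17; 17; 17; 17; 17; 17; 17; 17];
  [:: 17; 17; 17; 17; 17; 17; 17; 17; 17; 17; 17; 17; 17; 17; 17; 17; 17; 17; 17; 17; 17; 17; 17; 17; 17; 17; 17; 17; 17; 17; 17; 17];
  [:: 20; 17; 0; 0; 20; 17; 0; 0; 20; 17; 0; 0; 20; 17; 0; 0; 20; 17; 0; 0; 20; 17; 0; 0; 20; 17; 0; 0; 20; 17; 0; 0];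
  [:: 17; 17; 17; 17; 17; 17; 17; 17; 17; 17; 17; 17; 17; 17; 17; 17; 17; 17; 17; 17; 17; 17; 17; 17; 17; 17; 17; 17; 17; 17; 17; 17];
  [:: 17; 17; 17; 17; 17; 17; 17; 17; 17; 17; 17; 17; 17; 17; 17; 17; 17; 17; 17; 17; 17; 17; 17; 17; 17; 17; 17; 17; 17; 17; 17; 17];
  [:: 17; 17; 17; 17; 17; 17; 17; 17; 17; 17; 17; 17; 17; 17; 17; 17; 17; 17; 17; 17; 17; 17; 17; 17; 17; 17; 17; 17; 17; 17; 17; 17];
  [:: 20; 20; 20; 17; 20; 20; 20; 17; 20; 20; 20; 17; 20; 20; 20; 17; 20; 20; 20; 17; 20; 20; 20; 17; 20; 20; 20; 17; 20; 20; 20; 17];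
  [:: 17; 17; 17; 17; 17; 17; 17; 17; 17; 17; 17; 17; 17; 17; 17; 17; 17; 17; 17; 17; 17; 17; 17; 17; 17; 17; 17; 17; 17; 17; 17; 17];
  [:: 20; 20; 20; 20; 20; 20; 20; 20; 20; 20; 20; 20; 20; 20; 20; 20; 20; 20; 20; 20; 20; 20; 20; 20; 20; 20; 20; 20; 20; 20; 20; 20];
  [:: 20; 20; 20; 20; 0; 0; 0; 0; 20; 20; 20; 20; 0; 0; 0; 0; 20; 20; 20; 20; 0; 0; 0; 0; 20; 20; 20; 20; 0; 0; 0; 0];
  [:: 23; 20; 0; 0; 0; 0; 0; 0; 23; 20; 0; 0; 0; 0; 0; 0; 23; 20; 0; 0; 0; 0; 0; 0; 23; 20; 0; 0; 0; 0; 0; 0];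
  [:: 17; 17; 17; 17; 17; 17; 17; 17; 17; 17; 17; 17; 17; 17; 17; 17; 17; 17; 17; 17; 17; 17; 17; 17; 17; 17; 17; 17; 17; 17; 17; 17];
  [:: 17; 17; 17; 17; 17; 17; 17; 17; 17; 17; 17; 17; 17; 17; 17; 17; 17; 17; 17; 17; 17; 17; 17; 17; 17; 17; 17; 17; 17; 17; 17; 17];
  [:: 17; 17; 17; 17; 17; 17; 17; 17; 17; 17; 17; 17; 17; 17; 17; 17; 17; 17; 17; 17; 17; 17; 17; 17; 17; 17; 17; 17; 17; 17; 17; 17];
  [:: 20; 20; 20; 17; 20; 20; 20; 17; 20; 20; 20; 17; 20; 20; 20; 17; 20; 20; 20; 17; 20; 20; 20; 17; 20; 20; 20; 17; 20; 20; 20; 17];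
  [:: 17; 17; 17; 17; 17; 17; 17; 17; 17; 17; 17; 17; 17; 17; 17; 17; 17; 17; 17; 17; 17; 17; 17; 17; 17; 17; 17; 17; 17; 17; 17; 17];
  [:: 20; 20; 20; 20; 20; 20; 20; 20; 20; 20; 20; 20; 20; 20; 20; 20; 20; 20; 20; 20; 20; 20; 20; 20; 20; 20; 20; 20; 20; 20; 20; 20];
  [:: 20; 20; 20; 20; 20; 20; 20; 20; 20; 20; 20; 20; 20; 20; 20; 20; 20; 20; 20; 20; 20; 20; 20; 20; 20; 20; 20; 20; 20; 20; 20; 20];
  [:: 23; 20; 0; 0; 23; 20; 0; 0; 23; 20; 0; 0; 23; 20; 0; 0; 23; 20; 0; 0; 23; 20; 0; 0; 23; 20; 0; 0; 23; 20; 0; 0];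
  [:: 20; 20; 20; 20; 20; 20; 20; 20; 20; 20; 20; 20; 20; 20; 20; 20; 17; 17; 17; 17; 17; 17; 17; 17; 17; 17; 17; 17; 17; 17; 17; 17];
  [:: 20; 20; 20; 20; 20; 20; 20; 20; 20; 20; 20; 20; 20; 20; 20; 20; 20; 20; 20; 20; 20; 20; 20; 20; 17; 17; 17; 17; 17; 17; 17; 17];
  [:: 20; 20; 20; 20; 20; 20; 20; 20; 20; 20; 20; 20; 20; 20; 20; 20; 20; 20; 20; 20; 20; 20; 20; 20; 17; 17; 17; 17; 17; 17; 17; 17];
  [:: 23; 23; 23; 20; 23; 23; 23; 20; 23; 23; 23; 20; 23; 23; 23; 20; 23; 20; 23; 20; 23; 20; 23; 20; 20; 20; 20; 17; 20; 20; 20; 17];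
  [:: 20; 20; 20; 20; 20; 20; 20; 20; 0; 0; 0; 0; 0; 0; 0; 0; 17; 17; 17; 17; 17; 17; 17; 17; 0; 0; 0; 0; 0; 0; 0; 0];
  [:: 23; 23; 23; 23; 23; 23; 23; 23; 0; 0; 0; 0; 0; 0; 0; 0; 20; 20; 20; 20; 20; 20; 20; 20; 0; 0; 0; 0; 0; 0; 0; 0];
  [:: 23; 23; 23; 23; 0; 0; 0; 0; 0; 0; 0; 0; 0; 0; 0; 0; 20; 20; 20; 20; 0; 0; 0; 0; 0; 0; 0; 0; 0; 0; 0; 0];
  [:: 26; 23; 0; 0; 0; 0; 0; 0; 0; 0; 0; 0; 0; 0; 0; 0; 23; 20; 0; 0; 0; 0; 0; 0; 0; 0; 0; 0; 0; 0; 0; 0]];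
 [:: [:: 16; 16; 16; 16; 16; 16; 16; 16; 16; 16; 16; 16; 16; 16; 16; 16; 16; 16; 16; 16; 16; 16; 16; 16; 16; 16; 16; 16; 16; 16; 16; 16];
  [:: 16; 16; 16; 16; 16; 16; 16; 16; 16; 16; 16; 16; 16; 16; 16; 16; 16; 16; 16; 16; 16; 16; 16; 16; 16; 16; 16; 16; 16; 16; 16; 16];
  [:: 16; 16; 16; 16; 16; 16; 16; 16; 16; 16; 16; 16; 16; 16; 16; 16; 16; 16; 16; 16; 16; 16; 16; 16; 16; 16; 16; 16; 16; 16; 16; 16];
  [:: 19; 19; 19; 16; 19; 19; 19; 16; 19; 19; 19; 16; 19; 19; 19; 16; 19; 19; 19; 16; 19; 19; 19; 16; 19; 19; 19; 16; 19; 19; 19; 16];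
  [:: 16; 16; 16; 16; 16; 16; 16; 16; 16; 16; 16; 16; 16; 16; 16; 16; 16; 16; 16; 16; 16; 16; 16; 16; 16; 16; 16; 16; 16; 16; 16; 16];
  [:: 19; 19; 19; 19; 19; 19; 19; 19; 19; 19; 19; 19; 19; 19; 19; 19; 19; 19; 19; 19; 19; 19; 19; 19; 19; 19; 19; 19; 19; 19; 19; 19];
  [:: 19; 19; 19; 19; 19; 19; 16; 16; 19; 19; 19; 19; 19; 19; 16; 16; 19; 19; 19; 19; 19; 19; 16; 16; 19; 19; 19; 19; 19; 19; 16; 16];
  [:: 22; 19; 0; 0; 19; 19; 0; 0; 22; 19; 0; 0; 19; 19; 0; 0; 22; 19; 0; 0; 19; 19; 0; 0; 22; 19; 0; 0; 19; 19; 0; 0];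
  [:: 16; 16; 16; 16; 16; 16; 16; 16; 16; 16; 16; 16; 16; 16; 16; 16; 16; 16; 16; 16; 16; 16; 16; 16; 16; 16; 16; 16; 16; 16; 16; 16];
  [:: 19; 19; 19; 19; 19; 19; 19; 19; 19; 19; 19; 19; 19; 19; 19; 19; 19; 19; 19; 19; 19; 19; 19; 19; 19; 19; 19; 19; 19; 19; 19; 19];
  [:: 19; 19; 19; 19; 19; 19; 19; 19; 19; 19; 19; 19; 19; 19; 19; 19; 19; 19; 19; 19; 19; 19; 19; 19; 19; 19; 19; 19; 19; 19; 19; 19];
  [:: 19; 19; 19; 19; 19; 19; 19; 19; 19; 19; 19; 19; 19; 19; 19; 19; 19; 19; 19; 19; 19; 19; 19; 19; 19; 19; 19; 19; 19; 19; 19; 19];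
  [:: 19; 19; 19; 19; 19; 19; 19; 19; 19; 19; 19; 19; 16; 16; 16; 16; 19; 19; 19; 19; 19; 19; 19; 19; 19; 19; 19; 19; 16; 16; 16; 16];
  [:: 22; 22; 22; 22; 22; 22; 22; 22; 19; 19; 19; 19; 19; 19; 19; 19; 22; 22; 22; 22; 22; 22; 22; 22; 19; 19; 19; 19; 19; 19; 19; 19];
  [:: 22; 22; 19; 19; 0; 0; 0; 0; 19; 19; 16; 16; 0; 0; 0; 0; 22; 22; 19; 19; 0; 0; 0; 0; 19; 19; 16; 16; 0; 0; 0; 0];
  [:: 22; 22; 0; 0; 0; 0; 0; 0; 19; 19; 0; 0; 0; 0; 0; 0; 22; 22; 0; 0; 0; 0; 0; 0; 19; 19; 0; 0; 0; 0; 0; 0];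
  [:: 16; 16; 16; 16; 16; 16; 16; 16; 16; 16; 16; 16; 16; 16; 16; 16; 16; 16; 16; 16; 16; 16; 16; 16; 16; 16; 16; 16; 16; 16; 16; 16];
  [:: 16; 16; 16; 16; 16; 16; 16; 16; 16; 16; 16; 16; 16; 16; 16; 16; 16; 16; 16; 16; 16; 16; 16; 16; 16; 16; 16; 16; 16; 16; 16; 16];
  [:: 19; 19; 19; 19; 19; 19; 19; 19; 19; 19; 19; 19; 19; 19; 19; 19; 19; 19; 19; 19; 19; 19; 19; 19; 19; 19; 19; 19; 19; 19; 19; 19];
  [:: 19; 19; 19; 16; 19; 19; 19; 16; 19; 19; 19; 16; 19; 19; 19; 16; 19; 19; 19; 16; 19; 19; 19; 16; 19; 19; 19; 16; 19; 19; 19; 16];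
  [:: 19; 19; 19; 19; 19; 19; 19; 19; 19; 19; 19; 19; 19; 19; 19; 19; 19; 19; 19; 19; 19; 19; 19; 19; 19; 19; 19; 19; 19; 19; 19; 19];
  [:: 19; 19; 19; 19; 19; 19; 19; 19; 19; 19; 19; 19; 19; 19; 19; 19; 19; 19; 19; 19; 19; 19; 19; 19; 19; 19; 19; 19; 19; 19; 19; 19];
  [:: 22; 22; 19; 19; 22; 22; 19; 19; 22; 22; 19; 19; 22; 22; 19; 19; 22; 22; 19; 19; 22; 22; 19; 19; 22; 22; 19; 19; 22; 22; 19; 19];
  [:: 22; 19; 0; 0; 22; 19; 0; 0; 22; 19; 0; 0; 22; 19; 0; 0; 22; 19; 0; 0; 22; 19; 0; 0; 22; 19; 0; 0; 22; 19; 0; 0];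
  [:: 19; 19; 19; 19; 19; 19; 19; 19; 19; 19; 19; 19; 19; 19; 19; 19; 19; 19; 19; 19; 19; 19; 19; 19; 16; 16; 16; 16; 16; 16; 16; 16];
  [:: 19; 19; 19; 19; 19; 19; 19; 19; 19; 19; 19; 19; 19; 19; 19; 19; 19; 19; 19; 19; 19; 19; 19; 19; 16; 16; 16; 16; 16; 16; 16; 16];
  [:: 19; 19; 19; 19; 19; 19; 19; 19; 19; 19; 19; 19; 19; 19; 19; 19; 19; 19; 19; 19; 19; 19; 19; 19; 19; 19; 19; 19; 19; 19; 19; 19];
  [:: 22; 22; 22; 19; 22; 22; 22; 19; 22; 22; 22; 19; 22; 22; 22; 19; 22; 22; 22; 19; 22; 22; 22; 19; 19; 19; 19; 19; 19; 19; 19; 19];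
  [:: 22; 22; 22; 22; 19; 19; 19; 19; 0; 0; 0; 0; 0; 0; 0; 0; 19; 19; 19; 19; 19; 19; 19; 19; 0; 0; 0; 0; 0; 0; 0; 0];
  [:: 22; 22; 22; 22; 22; 22; 22; 22; 0; 0; 0; 0; 0; 0; 0; 0; 19; 19; 19; 19; 19; 19; 19; 19; 0; 0; 0; 0; 0; 0; 0; 0];
  [:: 22; 22; 19; 19; 0; 0; 0; 0; 0; 0; 0; 0; 0; 0; 0; 0; 22; 22; 19; 19; 0; 0; 0; 0; 0; 0; 0; 0; 0; 0; 0; 0];
  [:: 22; 22; 0; 0; 0; 0; 0; 0; 0; 0; 0; 0; 0; 0; 0; 0; 22; 19; 0; 0; 0; 0; 0; 0; 0; 0; 0; 0; 0; 0; 0; 0]];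
 [:: [:: 12; 12; 12; 12; 12; 12; 12; 12; 12; 12; 12; 12; 12; 12; 12; 12; 12; 12; 12; 12; 12; 12; 12; 12; 12; 12; 12; 12; 12; 12; 12; 12];
  [:: 15; 15; 15; 15; 15; 15; 15; 15; 15; 15; 15; 15; 15; 15; 15; 15; 15; 15; 15; 15; 15; 15; 15; 15; 15; 15; 15; 15; 15; 15; 15; 15];
  [:: 15; 15; 15; 15; 15; 15; 15; 15; 15; 15; 15; 15; 15; 15; 15; 15; 15; 15; 15; 15; 15; 15; 15; 15; 15; 15; 15; 15; 15; 15; 15; 15];
  [:: 18; 18; 18; 18; 18; 18; 18; 18; 18; 18; 18; 18; 18; 18; 18; 18; 18; 18; 18; 18; 18; 18; 18; 18; 18; 18; 18; 18; 18; 18; 18; 18];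
  [:: 15; 15; 15; 15; 15; 15; 15; 15; 15; 15; 15; 15; 15; 15; 15; 15; 15; 15; 15; 15; 15; 15; 15; 15; 15; 15; 15; 15; 15; 15; 15; 15];
  [:: 18; 18; 18; 18; 18; 18; 18; 18; 18; 18; 18; 18; 18; 18; 18; 18; 18; 18; 18; 18; 18; 18; 18; 18; 18; 18; 18; 18; 18; 18; 18; 18];
  [:: 18; 18; 18; 18; 18; 18; 15; 15; 18; 18; 18; 18; 18; 18; 15; 15; 18; 18; 18; 18; 18; 18; 15; 15; 18; 18; 18; 18; 18; 18; 15; 15];
  [:: 21; 18; 0; 0; 18; 18; 0; 0; 21; 18; 0; 0; 18; 18; 0; 0; 21; 18; 0; 0; 18; 18; 0; 0; 21; 18; 0; 0; 18; 18; 0; 0];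
  [:: 15; 15; 15; 15; 15; 15; 15; 15; 15; 15; 15; 15; 15; 15; 15; 15; 15; 15; 15; 15; 15; 15; 15; 15; 15; 15; 15; 15; 15; 15; 15; 15];
  [:: 18; 18; 18; 18; 18; 18; 18; 18; 18; 18; 18; 18; 18; 18; 18; 18; 18; 18; 18; 18; 18; 18; 18; 18; 18; 18; 18; 18; 18; 18; 18; 18];
  [:: 18; 18; 18; 18; 18; 18; 18; 18; 18; 18; 18; 18; 18; 18; 18; 18; 18; 18; 18; 18; 18; 18; 18; 18; 18; 18; 18; 18; 18; 18; 18; 18];
  [:: 18; 18; 18; 18; 18; 18; 18; 18; 18; 18; 18; 18; 18; 18; 18; 18; 18; 18; 18; 18; 18; 18; 18; 18; 18; 18; 18; 18; 18; 18; 18; 18];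
  [:: 18; 18; 18; 18; 18; 18; 18; 18; 18; 18; 18; 18; 15; 15; 15; 15; 18; 18; 18; 18; 18; 18; 18; 18; 18; 18; 18; 18; 15; 15; 15; 15];
  [:: 21; 21; 21; 21; 21; 21; 21; 21; 21; 21; 21; 21; 18; 18; 18; 18; 21; 21; 21; 21; 21; 21; 21; 21; 21; 21; 21; 21; 18; 18; 18; 18];
  [:: 21; 21; 18; 18; 0; 0; 0; 0; 18; 18; 15; 15; 0; 0; 0; 0; 21; 21; 18; 18; 0; 0; 0; 0; 18; 18; 15; 15; 0; 0; 0; 0];
  [:: 21; 21; 0; 0; 0; 0; 0; 0; 18; 18; 0; 0; 0; 0; 0; 0; 21; 21; 0; 0; 0; 0; 0; 0; 18; 18; 0; 0; 0; 0; 0; 0];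
  [:: 15; 15; 15; 15; 15; 15; 15; 15; 15; 15; 15; 15; 15; 15; 15; 15; 15; 15; 15; 15; 15; 15; 15; 15; 15; 15; 15; 15; 15; 15; 15; 15];
  [:: 18; 18; 18; 18; 18; 18; 18; 18; 18; 18; 18; 18; 18; 18; 18; 18; 18; 18; 18; 18; 18; 18; 18; 18; 18; 18; 18; 18; 18; 18; 18; 18];
  [:: 18; 18; 18; 18; 18; 18; 18; 18; 18; 18; 18; 18; 18; 18; 18; 18; 18; 18; 18; 18; 18; 18; 18; 18; 18; 18; 18; 18; 18; 18; 18; 18];
  [:: 21; 18; 21; 18; 21; 18; 21; 18; 21; 18; 21; 18; 21; 18; 21; 18; 21; 18; 21; 18; 21; 18; 21; 18; 21; 18; 21; 18; 21; 18; 21; 18];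
  [:: 18; 18; 18; 18; 18; 18; 18; 18; 18; 18; 18; 18; 18; 18; 18; 18; 18; 18; 18; 18; 18; 18; 18; 18; 18; 18; 18; 18; 18; 18; 18; 18];
  [:: 21; 21; 21; 21; 21; 21; 21; 21; 21; 21; 21; 21; 21; 21; 21; 21; 21; 21; 21; 21; 21; 21; 21; 21; 21; 21; 21; 21; 21; 21; 21; 21];
  [:: 21; 21; 21; 21; 21; 21; 18; 18; 21; 21; 21; 21; 21; 21; 18; 18; 21; 21; 21; 21; 21; 21; 18; 18; 21; 21; 21; 21; 21; 21; 18; 18];
  [:: 24; 21; 0; 0; 21; 21; 0; 0; 24; 21; 0; 0; 21; 21; 0; 0; 24; 21; 0; 0; 21; 21; 0; 0; 24; 21; 0; 0; 21; 21; 0; 0];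
  [:: 18; 18; 18; 18; 18; 18; 18; 18; 18; 18; 18; 18; 18; 18; 18; 18; 18; 18; 18; 18; 18; 18; 18; 18; 18; 18; 18; 18; 18; 18; 18; 18];
  [:: 21; 21; 21; 21; 21; 21; 21; 21; 21; 21; 21; 21; 21; 21; 21; 21; 18; 18; 18; 18; 18; 18; 18; 18; 18; 18; 18; 18; 18; 18; 18; 18];
  [:: 18; 18; 18; 18; 18; 18; 18; 18; 18; 18; 18; 18; 18; 18; 18; 18; 18; 18; 18; 18; 18; 18; 18; 18; 18; 18; 18; 18; 18; 18; 18; 18];
  [:: 21; 21; 21; 21; 21; 21; 21; 21; 21; 21; 21; 21; 21; 21; 21; 21; 21; 21; 21; 21; 21; 21; 21; 21; 21; 21; 21; 18; 21; 21; 21; 18];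
  [:: 21; 21; 21; 21; 18; 18; 18; 18; 0; 0; 0; 0; 0; 0; 0; 0; 18; 18; 18; 18; 18; 18; 18; 18; 0; 0; 0; 0; 0; 0; 0; 0];
  [:: 24; 24; 24; 24; 21; 21; 21; 21; 0; 0; 0; 0; 0; 0; 0; 0; 21; 21; 21; 21; 21; 21; 21; 21; 0; 0; 0; 0; 0; 0; 0; 0];
  [:: 21; 21; 18; 18; 0; 0; 0; 0; 0; 0; 0; 0; 0; 0; 0; 0; 21; 21; 18; 18; 0; 0; 0; 0; 0; 0; 0; 0; 0; 0; 0; 0];
  [:: 21; 21; 0; 0; 0; 0; 0; 0; 0; 0; 0; 0; 0; 0; 0; 0; 21; 21; 0; 0; 0; 0; 0; 0; 0; 0; 0; 0; 0; 0; 0; 0]];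
 [:: [:: 14; 14; 14; 14; 14; 14; 14; 14; 14; 14; 14; 14; 14; 14; 14; 14; 14; 14; 14; 14; 14; 14; 14; 14; 14; 14; 14; 14; 14; 14; 14; 14];
  [:: 17; 17; 17; 17; 17; 17; 17; 17; 17; 17; 17; 17; 17; 17; 17; 17; 17; 17; 17; 17; 17; 17; 17; 17; 17; 17; 17; 17; 17; 17; 17; 17];
  [:: 17; 17; 17; 17; 17; 17; 17; 17; 17; 17; 17; 17; 17; 17; 17; 17; 17; 17; 17; 17; 17; 17; 17; 17; 17; 17; 17; 17; 17; 17; 17; 17];
  [:: 20; 17; 20; 17; 20; 17; 20; 17; 20; 17; 20; 17; 20; 17; 20; 17; 20; 17; 20; 17; 20; 17; 20; 17; 20; 17; 20; 17; 20; 17; 20; 17];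
  [:: 14; 14; 14; 14; 14; 14; 14; 14; 14; 14; 14; 14; 14; 14; 14; 14; 14; 14; 14; 14; 14; 14; 14; 14; 14; 14; 14; 14; 14; 14; 14; 14];
  [:: 17; 17; 17; 17; 17; 17; 17; 17; 17; 17; 17; 17; 17; 17; 17; 17; 17; 17; 17; 17; 17; 17; 17; 17; 17; 17; 17; 17; 17; 17; 17; 17];
  [:: 17; 17; 17; 17; 17; 17; 17; 17; 17; 17; 17; 17; 17; 17; 17; 17; 17; 17; 17; 17; 17; 17; 17; 17; 17; 17; 17; 17; 17; 17; 17; 17];
  [:: 20; 17; 0; 0; 20; 17; 0; 0; 20; 17; 0; 0; 20; 17; 0; 0; 20; 17; 0; 0; 20; 17; 0; 0; 20; 17; 0; 0; 20; 17; 0; 0];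
  [:: 17; 17; 17; 17; 17; 17; 17; 17; 17; 17; 17; 17; 17; 17; 17; 17; 17; 17; 17; 17; 17; 17; 17; 17; 17; 17; 17; 17; 17; 17; 17; 17];
  [:: 17; 17; 17; 17; 17; 17; 17; 17; 17; 17; 17; 17; 17; 17; 17; 17; 17; 17; 17; 17; 17; 17; 17; 17; 17; 17; 17; 17; 17; 17; 17; 17];
  [:: 17; 17; 17; 17; 17; 17; 17; 17; 17; 17; 17; 17; 17; 17; 17; 17; 17; 17; 17; 17; 17; 17; 17; 17; 17; 17; 17; 17; 17; 17; 17; 17];
  [:: 20; 20; 20; 17; 20; 20; 20; 17; 20; 20; 20; 17; 20; 20; 20; 17; 20; 20; 20; 17; 20; 20; 20; 17; 20; 20; 20; 17; 20; 20; 20; 17];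
  [:: 17; 17; 17; 17; 17; 17; 17; 17; 17; 17; 17; 17; 17; 17; 17; 17; 17; 17; 17; 17; 17; 17; 17; 17; 17; 17; 17; 17; 17; 17; 17; 17];
  [:: 20; 20; 20; 20; 20; 20; 20; 20; 20; 20; 20; 20; 17; 17; 17; 17; 20; 20; 20; 20; 20; 20; 20; 20; 20; 20; 20; 20; 17; 17; 17; 17];
  [:: 20; 20; 20; 20; 0; 0; 0; 0; 20; 20; 17; 17; 0; 0; 0; 0; 20; 20; 20; 20; 0; 0; 0; 0; 20; 20; 17; 17; 0; 0; 0; 0];
  [:: 23; 20; 0; 0; 0; 0; 0; 0; 20; 17; 0; 0; 0; 0; 0; 0; 23; 20; 0; 0; 0; 0; 0; 0; 20; 17; 0; 0; 0; 0; 0; 0];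
  [:: 17; 17; 17; 17; 17; 17; 17; 17; 17; 17; 17; 17; 17; 17; 17; 17; 17; 17; 17; 17; 17; 17; 17; 17; 17; 17; 17; 17; 17; 17; 17; 17];
  [:: 17; 17; 17; 17; 17; 17; 17; 17; 17; 17; 17; 17; 17; 17; 17; 17; 17; 17; 17; 17; 17; 17; 17; 17; 17; 17; 17; 17; 17; 17; 17; 17];
  [:: 17; 17; 17; 17; 17; 17; 17; 17; 17; 17; 17; 17; 17; 17; 17; 17; 17; 17; 17; 17; 17; 17; 17; 17; 17; 17; 17; 17; 17; 17; 17; 17];
  [:: 20; 20; 20; 17; 20; 20; 20; 17; 20; 20; 20; 17; 20; 20; 20; 17; 20; 20; 20; 17; 20; 20; 20; 17; 20; 20; 20; 17; 20; 20; 20; 17];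
  [:: 17; 17; 17; 17; 17; 17; 17; 17; 17; 17; 17; 17; 17; 17; 17; 17; 17; 17; 17; 17; 17; 17; 17; 17; 17; 17; 17; 17; 17; 17; 17; 17];
  [:: 20; 20; 20; 20; 20; 20; 20; 20; 20; 20; 20; 20; 20; 20; 20; 20; 20; 20; 20; 20; 20; 20; 20; 20; 20; 20; 20; 20; 20; 20; 20; 20];
  [:: 20; 20; 20; 20; 20; 20; 17; 17; 20; 20; 20; 20; 20; 20; 17; 17; 20; 20; 20; 20; 20; 20; 17; 17; 20; 20; 20; 20; 20; 20; 17; 17];
  [:: 23; 20; 0; 0; 20; 20; 0; 0; 23; 20; 0; 0; 20; 20; 0; 0; 23; 20; 0; 0; 20; 20; 0; 0; 23; 20; 0; 0; 20; 20; 0; 0];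
  [:: 20; 20; 20; 20; 20; 20; 20; 20; 20; 20; 20; 20; 20; 20; 20; 20; 17; 17; 17; 17; 17; 17; 17; 17; 17; 17; 17; 17; 17; 17; 17; 17];
  [:: 20; 20; 20; 20; 20; 20; 20; 20; 20; 20; 20; 20; 20; 20; 20; 20; 20; 20; 20; 20; 20; 20; 20; 20; 17; 17; 17; 17; 17; 17; 17; 17];
  [:: 20; 20; 20; 20; 20; 20; 20; 20; 20; 20; 20; 20; 20; 20; 20; 20; 20; 20; 20; 20; 20; 20; 20; 20; 17; 17; 17; 17; 17; 17; 17; 17];
  [:: 23; 23; 23; 20; 23; 23; 23; 20; 23; 23; 23; 20; 23; 23; 23; 20; 23; 20; 23; 20; 23; 20; 23; 20; 20; 20; 20; 17; 20; 20; 20; 17];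
  [:: 20; 20; 20; 20; 20; 20; 20; 20; 0; 0; 0; 0; 0; 0; 0; 0; 17; 17; 17; 17; 17; 17; 17; 17; 0; 0; 0; 0; 0; 0; 0; 0];
  [:: 23; 23; 23; 23; 20; 20; 20; 20; 0; 0; 0; 0; 0; 0; 0; 0; 20; 20; 20; 20; 20; 20; 20; 20; 0; 0; 0; 0; 0; 0; 0; 0];
  [:: 23; 23; 20; 20; 0; 0; 0; 0; 0; 0; 0; 0; 0; 0; 0; 0; 20; 20; 17; 17; 0; 0; 0; 0; 0; 0; 0; 0; 0; 0; 0; 0];
  [:: 23; 20; 0; 0; 0; 0; 0; 0; 0; 0; 0; 0; 0; 0; 0; 0; 20; 17; 0; 0; 0; 0; 0; 0; 0; 0; 0; 0; 0; 0; 0; 0]];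
 [:: [:: 13; 13; 13; 13; 13; 13; 13; 13; 13; 13; 13; 13; 13; 13; 13; 13; 13; 13; 13; 13; 13; 13; 13; 13; 13; 13; 13; 13; 13; 13; 13; 13];
  [:: 16; 16; 16; 16; 16; 16; 16; 16; 16; 16; 16; 16; 16; 16; 16; 16; 16; 16; 16; 16; 16; 16; 16; 16; 16; 16; 16; 16; 16; 16; 16; 16];
  [:: 16; 16; 16; 16; 16; 16; 16; 16; 16; 16; 16; 16; 16; 16; 16; 16; 16; 16; 16; 16; 16; 16; 16; 16; 16; 16; 16; 16; 16; 16; 16; 16];
  [:: 19; 16; 19; 16; 19; 16; 19; 16; 19; 16; 19; 16; 19; 16; 19; 16; 19; 16; 19; 16; 19; 16; 19; 16; 19; 16; 19; 16; 19; 16; 19; 16];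
  [:: 16; 16; 16; 16; 16; 16; 16; 16; 16; 16; 16; 16; 16; 16; 16; 16; 16; 16; 16; 16; 16; 16; 16; 16; 16; 16; 16; 16; 16; 16; 16; 16];
  [:: 19; 19; 19; 19; 19; 19; 19; 19; 19; 19; 19; 19; 19; 19; 19; 19; 19; 19; 19; 19; 19; 19; 19; 19; 19; 19; 19; 19; 19; 19; 19; 19];
  [:: 19; 19; 16; 16; 19; 19; 16; 16; 19; 19; 16; 16; 19; 19; 16; 16; 19; 19; 16; 16; 19; 19; 16; 16; 19; 19; 16; 16; 19; 19; 16; 16];
  [:: 19; 19; 0; 0; 19; 19; 0; 0; 19; 19; 0; 0; 19; 19; 0; 0; 19; 19; 0; 0; 19; 19; 0; 0; 19; 19; 0; 0; 19; 19; 0; 0];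
  [:: 16; 16; 16; 16; 16; 16; 16; 16; 16; 16; 16; 16; 16; 16; 16; 16; 16; 16; 16; 16; 16; 16; 16; 16; 16; 16; 16; 16; 16; 16; 16; 16];
  [:: 19; 19; 19; 19; 19; 19; 19; 19; 19; 19; 19; 19; 19; 19; 19; 19; 19; 19; 19; 19; 19; 19; 19; 19; 19; 19; 19; 19; 19; 19; 19; 19];
  [:: 19; 19; 19; 19; 19; 19; 19; 19; 19; 19; 19; 19; 19; 19; 19; 19; 19; 19; 19; 19; 19; 19; 19; 19; 19; 19; 19; 19; 19; 19; 19; 19];
  [:: 19; 19; 19; 19; 19; 19; 19; 19; 19; 19; 19; 19; 19; 19; 19; 19; 19; 19; 19; 19; 19; 19; 19; 19; 19; 19; 19; 19; 19; 19; 19; 19];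
  [:: 19; 19; 19; 19; 19; 19; 19; 19; 16; 16; 16; 16; 16; 16; 16; 16; 19; 19; 19; 19; 19; 19; 19; 19; 16; 16; 16; 16; 16; 16; 16; 16];
  [:: 22; 22; 22; 22; 22; 22; 22; 22; 19; 19; 19; 19; 19; 19; 19; 19; 22; 22; 22; 22; 22; 22; 22; 22; 19; 19; 19; 19; 19; 19; 19; 19];
  [:: 22; 22; 19; 19; 0; 0; 0; 0; 19; 19; 16; 16; 0; 0; 0; 0; 22; 22; 19; 19; 0; 0; 0; 0; 19; 19; 16; 16; 0; 0; 0; 0];
  [:: 22; 22; 0; 0; 0; 0; 0; 0; 19; 19; 0; 0; 0; 0; 0; 0; 22; 22; 0; 0; 0; 0; 0; 0; 19; 19; 0; 0; 0; 0; 0; 0];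
  [:: 16; 16; 16; 16; 16; 16; 16; 16; 16; 16; 16; 16; 16; 16; 16; 16; 16; 16; 16; 16; 16; 16; 16; 16; 16; 16; 16; 16; 16; 16; 16; 16];
  [:: 16; 16; 16; 16; 16; 16; 16; 16; 16; 16; 16; 16; 16; 16; 16; 16; 16; 16; 16; 16; 16; 16; 16; 16; 16; 16; 16; 16; 16; 16; 16; 16];
  [:: 19; 19; 19; 19; 19; 19; 19; 19; 19; 19; 19; 19; 19; 19; 19; 19; 19; 19; 19; 19; 19; 19; 19; 19; 19; 19; 19; 19; 19; 19; 19; 19];
  [:: 19; 19; 19; 16; 19; 19; 19; 16; 19; 19; 19; 16; 19; 19; 19; 16; 19; 19; 19; 16; 19; 19; 19; 16; 19; 19; 19; 16; 19; 19; 19; 16];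
  [:: 19; 19; 19; 19; 19; 19; 19; 19; 19; 19; 19; 19; 19; 19; 19; 19; 19; 19; 19; 19; 19; 19; 19; 19; 19; 19; 19; 19; 19; 19; 19; 19];
  [:: 19; 19; 19; 19; 19; 19; 19; 19; 19; 19; 19; 19; 19; 19; 19; 19; 19; 19; 19; 19; 19; 19; 19; 19; 19; 19; 19; 19; 19; 19; 19; 19];
  [:: 22; 22; 19; 19; 22; 22; 19; 19; 22; 22; 19; 19; 22; 22; 19; 19; 22; 22; 19; 19; 22; 22; 19; 19; 22; 22; 19; 19; 22; 22; 19; 19];
  [:: 22; 19; 0; 0; 22; 19; 0; 0; 22; 19; 0; 0; 22; 19; 0; 0; 22; 19; 0; 0; 22; 19; 0; 0; 22; 19; 0; 0; 22; 19; 0; 0];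
  [:: 19; 19; 19; 19; 19; 19; 19; 19; 19; 19; 19; 19; 19; 19; 19; 19; 16; 16; 16; 16; 16; 16; 16; 16; 16; 16; 16; 16; 16; 16; 16; 16];
  [:: 19; 19; 19; 19; 19; 19; 19; 19; 19; 19; 19; 19; 19; 19; 19; 19; 19; 19; 19; 19; 19; 19; 19; 19; 16; 16; 16; 16; 16; 16; 16; 16];
  [:: 19; 19; 19; 19; 19; 19; 19; 19; 19; 19; 19; 19; 19; 19; 19; 19; 19; 19; 19; 19; 19; 19; 19; 19; 19; 19; 19; 19; 19; 19; 19; 19];
  [:: 22; 22; 22; 19; 22; 22; 22; 19; 22; 22; 22; 19; 22; 22; 22; 19; 22; 19; 22; 19; 22; 19; 22; 19; 19; 19; 19; 16; 19; 19; 19; 16];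
  [:: 19; 19; 19; 19; 19; 19; 19; 19; 0; 0; 0; 0; 0; 0; 0; 0; 19; 19; 19; 19; 19; 19; 19; 19; 0; 0; 0; 0; 0; 0; 0; 0];
  [:: 22; 22; 22; 22; 22; 22; 22; 22; 0; 0; 0; 0; 0; 0; 0; 0; 19; 19; 19; 19; 19; 19; 19; 19; 0; 0; 0; 0; 0; 0; 0; 0];
  [:: 22; 22; 19; 19; 0; 0; 0; 0; 0; 0; 0; 0; 0; 0; 0; 0; 22; 22; 19; 19; 0; 0; 0; 0; 0; 0; 0; 0; 0; 0; 0; 0];
  [:: 22; 22; 0; 0; 0; 0; 0; 0; 0; 0; 0; 0; 0; 0; 0; 0; 22; 19; 0; 0; 0; 0; 0; 0; 0; 0; 0; 0; 0; 0; 0; 0]];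
 [:: [:: 12; 12; 12; 12; 12; 12; 12; 12; 12; 12; 12; 12; 12; 12; 12; 12; 12; 12; 12; 12; 12; 12; 12; 12; 12; 12; 12; 12; 12; 12; 12; 12];
  [:: 15; 15; 15; 15; 15; 15; 15; 15; 15; 15; 15; 15; 15; 15; 15; 15; 15; 15; 15; 15; 15; 15; 15; 15; 15; 15; 15; 15; 15; 15; 15; 15];
  [:: 15; 15; 15; 15; 15; 15; 15; 15; 15; 15; 15; 15; 15; 15; 15; 15; 15; 15; 15; 15; 15; 15; 15; 15; 15; 15; 15; 15; 15; 15; 15; 15];
  [:: 18; 15; 18; 15; 18; 15; 18; 15; 18; 15; 18; 15; 18; 15; 18; 15; 18; 15; 18; 15; 18; 15; 18; 15; 18; 15; 18; 15; 18; 15; 18; 15];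
  [:: 15; 15; 15; 15; 15; 15; 15; 15; 15; 15; 15; 15; 15; 15; 15; 15; 15; 15; 15; 15; 15; 15; 15; 15; 15; 15; 15; 15; 15; 15; 15; 15];
  [:: 18; 18; 18; 18; 18; 18; 18; 18; 18; 18; 18; 18; 18; 18; 18; 18; 18; 18; 18; 18; 18; 18; 18; 18; 18; 18; 18; 18; 18; 18; 18; 18];
  [:: 18; 18; 18; 18; 18; 18; 15; 15; 18; 18; 18; 18; 18; 18; 15; 15; 18; 18; 18; 18; 18; 18; 15; 15; 18; 18; 18; 18; 18; 18; 15; 15];
  [:: 21; 18; 0; 0; 18; 18; 0; 0; 21; 18; 0; 0; 18; 18; 0; 0; 21; 18; 0; 0; 18; 18; 0; 0; 21; 18; 0; 0; 18; 18; 0; 0];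
  [:: 15; 15; 15; 15; 15; 15; 15; 15; 15; 15; 15; 15; 15; 15; 15; 15; 15; 15; 15; 15; 15; 15; 15; 15; 15; 15; 15; 15; 15; 15; 15; 15];
  [:: 18; 18; 18; 18; 18; 18; 18; 18; 18; 18; 18; 18; 18; 18; 18; 18; 18; 18; 18; 18; 18; 18; 18; 18; 18; 18; 18; 18; 18; 18; 18; 18];
  [:: 18; 18; 18; 18; 18; 18; 18; 18; 18; 18; 18; 18; 18; 18; 18; 18; 18; 18; 18; 18; 18; 18; 18; 18; 18; 18; 18; 18; 18; 18; 18; 18];
  [:: 18; 18; 18; 18; 18; 18; 18; 18; 18; 18; 18; 18; 18; 18; 18; 18; 18; 18; 18; 18; 18; 18; 18; 18; 18; 18; 18; 18; 18; 18; 18; 18];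
  [:: 18; 18; 18; 18; 18; 18; 18; 18; 18; 18; 18; 18; 15; 15; 15; 15; 18; 18; 18; 18; 18; 18; 18; 18; 18; 18; 18; 18; 15; 15; 15; 15];
  [:: 21; 21; 21; 21; 21; 21; 21; 21; 21; 21; 21; 21; 18; 18; 18; 18; 21; 21; 21; 21; 21; 21; 21; 21; 21; 21; 21; 21; 18; 18; 18; 18];
  [:: 21; 21; 18; 18; 0; 0; 0; 0; 18; 18; 15; 15; 0; 0; 0; 0; 21; 21; 18; 18; 0; 0; 0; 0; 18; 18; 15; 15; 0; 0; 0; 0];
  [:: 21; 21; 0; 0; 0; 0; 0; 0; 18; 18; 0; 0; 0; 0; 0; 0; 21; 21; 0; 0; 0; 0; 0; 0; 18; 18; 0; 0; 0; 0; 0; 0];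
  [:: 15; 15; 15; 15; 15; 15; 15; 15; 15; 15; 15; 15; 15; 15; 15; 15; 15; 15; 15; 15; 15; 15; 15; 15; 15; 15; 15; 15; 15; 15; 15; 15];
  [:: 18; 18; 18; 18; 18; 18; 18; 18; 18; 18; 18; 18; 18; 18; 18; 18; 18; 18; 18; 18; 18; 18; 18; 18; 18; 18; 18; 18; 18; 18; 18; 18];
  [:: 18; 18; 18; 18; 18; 18; 18; 18; 18; 18; 18; 18; 18; 18; 18; 18; 18; 18; 18; 18; 18; 18; 18; 18; 18; 18; 18; 18; 18; 18; 18; 18];
  [:: 21; 18; 21; 18; 21; 18; 21; 18; 21; 18; 21; 18; 21; 18; 21; 18; 21; 18; 21; 18; 21; 18; 21; 18; 21; 18; 21; 18; 21; 18; 21; 18];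
  [:: 18; 18; 18; 18; 18; 18; 18; 18; 18; 18; 18; 18; 18; 18; 18; 18; 18; 18; 18; 18; 18; 18; 18; 18; 18; 18; 18; 18; 18; 18; 18; 18];
  [:: 21; 21; 21; 21; 21; 21; 21; 21; 21; 21; 21; 21; 21; 21; 21; 21; 21; 21; 21; 21; 21; 21; 21; 21; 21; 21; 21; 21; 21; 21; 21; 21];
  [:: 21; 21; 21; 21; 21; 21; 18; 18; 21; 21; 21; 21; 21; 21; 18; 18; 21; 21; 21; 21; 21; 21; 18; 18; 21; 21; 21; 21; 21; 21; 18; 18];
  [:: 24; 21; 0; 0; 21; 18; 0; 0; 24; 21; 0; 0; 21; 18; 0; 0; 24; 21; 0; 0; 21; 18; 0; 0; 24; 21; 0; 0; 21; 18; 0; 0];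
  [:: 18; 18; 18; 18; 18; 18; 18; 18; 18; 18; 18; 18; 18; 18; 18; 18; 15; 15; 15; 15; 15; 15; 15; 15; 15; 15; 15; 15; 15; 15; 15; 15];
  [:: 21; 21; 21; 21; 21; 21; 21; 21; 21; 21; 21; 21; 21; 21; 21; 21; 18; 18; 18; 18; 18; 18; 18; 18; 18; 18; 18; 18; 18; 18; 18; 18];
  [:: 18; 18; 18; 18; 18; 18; 18; 18; 18; 18; 18; 18; 18; 18; 18; 18; 18; 18; 18; 18; 18; 18; 18; 18; 18; 18; 18; 18; 18; 18; 18; 18];
  [:: 21; 21; 21; 21; 21; 21; 21; 21; 21; 21; 21; 21; 21; 21; 21; 21; 21; 21; 21; 18; 21; 21; 21; 18; 21; 18; 21; 18; 21; 18; 21; 18];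
  [:: 21; 21; 21; 21; 18; 18; 18; 18; 0; 0; 0; 0; 0; 0; 0; 0; 18; 18; 18; 18; 18; 18; 18; 18; 0; 0; 0; 0; 0; 0; 0; 0];
  [:: 24; 24; 24; 24; 21; 21; 21; 21; 0; 0; 0; 0; 0; 0; 0; 0; 21; 21; 21; 21; 18; 18; 18; 18; 0; 0; 0; 0; 0; 0; 0; 0];
  [:: 21; 21; 18; 18; 0; 0; 0; 0; 0; 0; 0; 0; 0; 0; 0; 0; 21; 21; 18; 18; 0; 0; 0; 0; 0; 0; 0; 0; 0; 0; 0; 0];
  [:: 21; 21; 0; 0; 0; 0; 0; 0; 0; 0; 0; 0; 0; 0; 0; 0; 21; 18; 0; 0; 0; 0; 0; 0; 0; 0; 0; 0; 0; 0; 0; 0]]].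
Definition TT : seq (seq (nat*nat*nat)) := [:: [:: (23,0,8); (29,0,8)];
 [:: (13,23,7); (22,29,7)];
 [:: (27,13,6); (27,22,6)];
 [:: (13,27,5); (13,27,8); (22,27,5); (22,27,8)];
 [:: (13,22,4); (13,22,7); (22,13,4); (22,13,7)];
 [:: (27,13,3); (27,13,6); (27,22,3); (27,22,6)];
 [:: (13,27,2); (13,27,5); (13,27,8); (22,27,2); (22,27,5); (22,27,8)];
 [:: (13,22,4); (13,22,7); (22,13,4); (22,13,7); (23,13,1); (29,22,1)];
 [:: (0,23,0); (0,29,0); (27,13,3); (27,13,6); (27,22,3); (27,22,6)]].
Definition phi a b q := nth 0 (nth [::] (nth [::] PT q) a) b.
Definition nq q := if q == 8 then 6 else q.+1.
Definition tight a b c q := ok3 a b c && (3 * pc b + phi a b q == 10 + phi b c (nq q)).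
Definition Tt u := nth [::] TT u.
Definition nextc a b q v := head 0 [seq c <- iota 0 32 | tight a b c q && ((b,c,nq q) \in Tt v)].
Definition pairs := [:: (1,0);(2,1);(3,2);(4,3);(5,4);(6,5);(7,6);(8,7);(6,8)].

Definition brev x := bit x 4 + bit x 3 * 2 + bit x 2 * 4 + bit x 1 * 8 + bit x 0 * 16.
Definition I32 := iota 0 32.

Definition C1 := all (fun q => all (fun a => all (fun b => all (fun c =>
   ~~ ok3 a b c || (3 * pc b + phi a b q <= 10 + phi b c (nq q))) I32) I32) I32) (iota 0 9).
Lemma C1_ok : C1. Proof. vm_compute. reflexivity. Qed.


Definition K_start := all (fun y => phi 0 y 0 == 20) I32.
Lemma K_start_ok : K_start. Proof. vm_compute. reflexivity. Qed.
Definition K_end := all (fun x => phi x 0 8 <= 24) I32.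
Lemma K_end_ok : K_end. Proof. vm_compute. reflexivity. Qed.
Definition K_base := all (fun x => (phi x 0 8 != 24) || ((x,0,8) \in Tt 0)) I32.
Lemma K_base_ok : K_base. Proof. vm_compute. reflexivity. Qed.
Definition K_T0 := all (fun s => (s.1.2 == 0) && (s.2 == 8) && (phi s.1.1 0 8 == 24)) (Tt 0).
Lemma K_T0_ok : K_T0. Proof. vm_compute. reflexivity. Qed.
Definition K_starts := all (fun u => all (fun s => (s.2 != 0) || (s.1.2 == 23) || (s.1.2 == 29)) (Tt u)) (iota 0 9).
Lemma K_starts_ok : K_starts. Proof. vm_compute. reflexivity. Qed.
Lemma K_init : (0,29,0) \in Tt 8. Proof. vm_compute. reflexivity. Qed.

Definition C5 := all (fun p => all (fun t => all (fun a => all (fun q =>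
   ~~ ((nq q == t.2) && tight a t.1.1 t.1.2 q) || ((a, t.1.1, q) \in Tt p.1)) (iota 0 9)) I32) (Tt p.2)) pairs.
Lemma C5_ok : C5. Proof. vm_compute. reflexivity. Qed.

Definition K_det := all (fun p => all (fun s =>
   all (fun c => ~~ (tight s.1.1 s.1.2 c s.2 && ((s.1.2, c, nq s.2) \in Tt p.2))
                  || (c == nextc s.1.1 s.1.2 s.2 p.2)) I32) (Tt p.1)) pairs.
Lemma K_det_ok : K_det. Proof. vm_compute. reflexivity. Qed.
Definition K_ex := all (fun p => all (fun s =>
   tight s.1.1 s.1.2 (nextc s.1.1 s.1.2 s.2 p.2) s.2
   && ((s.1.2, nextc s.1.1 s.1.2 s.2 p.2, nq s.2) \in Tt p.2)) (Tt p.1)) pairs.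
Lemma K_ex_ok : K_ex. Proof. vm_compute. reflexivity. Qed.

Lemma K_brev0 : brev 0 = 0. Proof. vm_compute. reflexivity. Qed.
Lemma K_brev23 : brev 23 = 29. Proof. vm_compute. reflexivity. Qed.
Lemma K_brev29 : brev 29 = 23. Proof. vm_compute. reflexivity. Qed.
Definition K_pcbrev := all (fun b => (pc (brev b) == pc b) && (brev b < 32)) I32.
Lemma K_pcbrev_ok : K_pcbrev. Proof. vm_compute. reflexivity. Qed.
Definition K_recon := all (fun b => bit b 0 + bit b 1 * 2 + bit b 2 * 4 + bit b 3 * 8 + bit b 4 * 16 == b) I32.
Lemma K_recon_ok : K_recon. Proof. vm_compute. reflexivity. Qed.
Definition K_okbrev := all (fun a => all (fun b => all (fun c =>
   ok3 (brev a) (brev b) (brev c) == ok3 a b c) I32) I32) I32.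
Lemma K_okbrev_ok : K_okbrev. Proof. vm_compute. reflexivity. Qed.


Lemma adj_pt (g : nat -> nat -> bool) a b x y :
  (((a == x) && ((b.+1 == y) || (y.+1 == b))) || ((b == y) && ((a.+1 == x) || (x.+1 == a)))) && g x y
  = (x == a) * (y == b.+1) * g a b.+1 + (x == a) * ((0 < b) && (y == b.-1)) * g a b.-1
  + (x == a.+1) * (y == b) * g a.+1 b + ((0 < a) && (x == a.-1)) * (y == b) * g a.-1 b :> nat.
Proof.
case: a => [|a]; case: b => [|b] /=;
repeat (case: eqP => [?|?]; subst => /=); rewrite ?muln0 ?mul0n ?muln1 ?add0n ?addn0 //; try lia.
Qed.



Definition cell h (W : word h 5) (i j : nat) : bool :=
  match (insub i : option 'I_h), (insub j : option 'I_5) with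
  | Some a, Some b => W a b | _, _ => false end.

Lemma cellE h (W : word h 5) (a : 'I_h) (b : 'I_5) : cell W a b = W a b.
Proof. by rewrite /cell !valK. Qed.

Lemma cell_out h (W : word h 5) i j : ~~ ((i < h) && (j < 5)) -> cell W i j = false.
Proof.
rewrite /cell; case: insubP => [a Ha _|//]; case: insubP => [b Hb _|//].
by rewrite Ha Hb.
Qed.

Lemma sum_ind n (m : nat) : \sum_(x < n) (x == m :> nat : nat) = (m < n).
Proof.
elim: n => [|n IH]; first by rewrite big_ord0.
rewrite big_ord_recr /= IH ltnS eq_sym.
by case: ltngtP => //= ->; rewrite ltnn.
Qed.

Lemma sum_ind2 n (m : nat) (P : bool) : \sum_(x < n) (P && (x == m :> nat) : nat) = P && (m < n).
Proof. by case: P => //=; [rewrite sum_ind | rewrite big1]. Qed.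

Lemma sum2_prod n m (P : 'I_n -> nat) (Q : 'I_m -> nat) K :
  \sum_(x < n) \sum_(y < m) (P x * Q y * K) = (\sum_(x < n) P x) * (\sum_(y < m) Q y) * K.
Proof.
rewrite -mulnA big_distrl /=; apply: eq_bigr => x _.
rewrite big_distrl big_distrr /=; apply: eq_bigr => y _.
by rewrite mulnA.
Qed.

Lemma degreeE h (W : word h 5) (c : 'I_h * 'I_5) :
  degree W c = ((0 < c.1) && cell W c.1.-1 c.2) + cell W c.1.+1 c.2
             + ((0 < c.2) && cell W c.1 c.2.-1) + cell W c.1 c.2.+1.
Proof.
rewrite /degree cardsE -sum1_card big_mkcond /=.
transitivity (\sum_(x < h) \sum_(y < 5)
   ((((c.1 == x :> nat) && ((c.2.+1 == y :> nat) || (y.+1 == c.2 :> nat)))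
    || ((c.2 == y :> nat) && ((c.1.+1 == x :> nat) || (x.+1 == c.1 :> nat)))) && cell W x y : nat)).
  rewrite pair_big /=; apply: eq_bigr => -[x y] _ /=.
  by rewrite unfold_in /= cellE; case: (_ && _).
under eq_bigr => x _ do (under eq_bigr => y _ do rewrite (adj_pt (cell W)); rewrite !big_split /=).
rewrite !big_split /= !sum2_prod !sum_ind !sum_ind2.
move: (ltn_ord c.1) (ltn_ord c.2); case: c => a b /= Ha Hb.
have E1 : (a.+1 < h) * (b < 5) * cell W a.+1 b = cell W a.+1 b.
  by case: (boolP (a.+1 < h)) => H /=; [rewrite Hb !mul1n | rewrite cell_out ?(negbTE H)].
have E2 : (a < h) * (b.+1 < 5) * cell W a b.+1 = cell W a b.+1.
  by case: (boolP (b.+1 < 5)) => H /=; [rewrite Ha !mul1n | rewrite cell_out ?(negbTE H) ?andbF ?muln0].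
have E3 : (a < h) * ((0 < b) && (b.-1 < 5)) * cell W a b.-1 = (0 < b) && cell W a b.-1.
  by rewrite Ha (leq_ltn_trans (leq_pred b) Hb) andbT; case: (0 < b); rewrite ?mul1n.
have E4 : ((0 < a) && (a.-1 < h)) * (b < 5) * cell W a.-1 b = (0 < a) && cell W a.-1 b.
  by rewrite Hb (leq_ltn_trans (leq_pred a) Ha) andbT; case: (0 < a); rewrite ?mul1n ?muln1.
rewrite E1 E2 E3 E4; lia.
Qed.


Definition rowc h (W : word h 5) i := \sum_(j < 5) cell W i j * 2 ^ j.
Definition pv (r : nat -> nat) i := if i is i'.+1 then r i' else 0.

Lemma rowcE h (W : word h 5) i : rowc W i =
  cell W i 0 + cell W i 1 * 2 + cell W i 2 * 4 + cell W i 3 * 8 + cell W i 4 * 16.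
Proof. by rewrite /rowc !big_ord_recr big_ord0 /= add0n expn0 muln1. Qed.

Lemma rowc_lt h (W : word h 5) i : rowc W i < 32.
Proof.
rewrite rowcE; case: (cell W i 0); case: (cell W i 1); case: (cell W i 2);
  case: (cell W i 3); case: (cell W i 4); by [].
Qed.

Lemma bit_rowc h (W : word h 5) i j : bit (rowc W i) j = cell W i j.
Proof.
case: j => [|[|[|[|[|j]]]]]; try (rewrite rowcE; case: (cell W i 0); case: (cell W i 1);
  case: (cell W i 2); case: (cell W i 3); case: (cell W i 4); by []).
rewrite cell_out ?andbF // /bit divn_small //.
apply: (leq_trans (rowc_lt W i)).
exact: (@leq_pexp2l 2 5 j.+1.+4 isT isT).
Qed.

Lemma rowc_out h (W : word h 5) i : h <= i -> rowc W i = 0.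
Proof. by move=> H; rewrite rowcE !cell_out // ltnNge H. Qed.

Lemma bit0 j : bit 0 j = false.
Proof. by rewrite /bit div0n. Qed.

Lemma bit_pv h (W : word h 5) i j : bit (pv (rowc W) i) j = (0 < i) && cell W i.-1 j.
Proof. by case: i => [|i] /=; rewrite ?bit0 ?bit_rowc. Qed.

Lemma cond_eq h (W : word h 5) (a : 'I_h) (b : 'I_5) :
  (W a b ==> (degree W (a, b) <= 2)) =
  (~~ bit (rowc W a) b || (bit (pv (rowc W) a) b + bit (rowc W a.+1) b
      + (if nat_of_ord b is j'.+1 then bit (rowc W a) j' else false) + bit (rowc W a) b.+1 <= 2)).
Proof.
rewrite degreeE /= !bit_rowc bit_pv -cellE implybE.
by case: b => [[|j] Hj] /=; rewrite ?bit_rowc.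
Qed.

Lemma inW2E h (W : word h 5) :
  inW2 W <-> (forall i, i < h -> ok3 (pv (rowc W) i) (rowc W i) (rowc W i.+1)).
Proof.
split.
- move=> /forallP H i Hi; apply/allP => j; rewrite mem_iota /= add0n => Hj.
  by have := H (Ordinal Hi, Ordinal Hj); rewrite /= cond_eq.
- move=> H; apply/forallP => -[a b].
  have /allP := H a (ltn_ord a).
  by move=> /(_ (nat_of_ord b)); rewrite mem_iota /= add0n ltn_ord -cond_eq; apply.
Qed.

Lemma nfilledE h (W : word h 5) : nfilled W = \sum_(i < h) pc (rowc W i).
Proof.
rewrite /nfilled cardsE -sum1_card big_mkcond /=.
transitivity (\sum_(x < h) \sum_(y < 5) (cell W x y : nat)).
  rewrite pair_big /=; apply: eq_bigr => -[x y] _ /=.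
  rewrite unfold_in /= cellE; change (mx_val W (x,y)) with (W x y); by case: (W x y).
apply: eq_bigr => i _.
by rewrite /pc !bit_rowc !big_ord_recr big_ord0 /= add0n.
Qed.

Lemma cellRV h (W : word h 5) (a : 'I_h) (b : 'I_5) : cell (reflV W) a b = cell W a (4 - b).
Proof. by rewrite cellE /reflV mxE -cellE /= subSS. Qed.

Lemma rowc_reflV h (W : word h 5) i : rowc (reflV W) i = brev (rowc W i).
Proof.
case: (ltnP i h) => Hi; last first.
  by rewrite !rowc_out // K_brev0.
rewrite rowcE /brev !bit_rowc.
have E := cellRV W (Ordinal Hi).
rewrite [cell _ i 0](E (@Ordinal 5 0 isT)) [cell _ i 1](E (@Ordinal 5 1 isT))
  [cell _ i 2](E (@Ordinal 5 2 isT)) [cell _ i 3](E (@Ordinal 5 3 isT))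
  [cell _ i 4](E (@Ordinal 5 4 isT)) /=.
by [].
Qed.

Definition mkw h (f : nat -> nat) : word h 5 := (\matrix_(i, j) bit (f i) j)%R.

Lemma cell_mkw h f i j : cell (mkw h f) i j = (i < h) && (j < 5) && bit (f i) j.
Proof.
case: (boolP ((i < h) && (j < 5))) => [/andP[Hi Hj]|Hn]; last first.
  by rewrite cell_out //; move: Hn; case: (i < h); case: (j < 5).
by rewrite (_ : i = Ordinal Hi) // (_ : j = Ordinal Hj) // cellE mxE.
Qed.

Lemma bits_recon x : x < 32 ->
  bit x 0 + bit x 1 * 2 + bit x 2 * 4 + bit x 3 * 8 + bit x 4 * 16 = x.
Proof.
move=> Hx; have := K_recon_ok; rewrite /K_recon => /allP /(_ x).
by rewrite mem_iota /= add0n => /(_ Hx) /eqP.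
Qed.

Lemma rowc_mkw h f i : f i < 32 -> rowc (mkw h f) i = if i < h then f i else 0.
Proof.
move=> Hf; rewrite rowcE !cell_mkw /=.
case: (i < h) => /=; last by [].
by rewrite bits_recon.
Qed.


Definition qn i := if i < 6 then i else 6 + i %% 3.
Definition key j := if j < 9 then j else 6 + j %% 3.

Lemma nq_qn i : nq (qn i) = qn i.+1.
Proof.
do 6 (case: i => [|i]; first by []).
rewrite /qn /nq /=.
have [H|[H|H]] : i.+4.+2 %% 3 = 0 \/ i.+4.+2 %% 3 = 1 \/ i.+4.+2 %% 3 = 2 by lia.
- rewrite H /=; have -> : i.+4.+3 %% 3 = 1 by lia. by [].
- rewrite H /=; have -> : i.+4.+3 %% 3 = 2 by lia. by [].
- rewrite H /=; have -> : i.+4.+3 %% 3 = 0 by lia. by [].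
Qed.

Lemma qn_lt i : qn i < 9.
Proof. rewrite /qn; case: ifP => H; lia. Qed.

Lemma key_lt j : key j < 9.
Proof. rewrite /key; case: ifP => H; lia. Qed.

Lemma key_pair j : (key j.+1, key j) \in pairs.
Proof.
do 9 (case: j => [|j]; first by []).
rewrite /key /=.
have [H|[H|H]] : j.+4.+4.+1 %% 3 = 0 \/ j.+4.+4.+1 %% 3 = 1 \/ j.+4.+4.+1 %% 3 = 2 by lia.
- rewrite H; have -> : j.+4.+4.+2 %% 3 = 1 by lia. by [].
- rewrite H; have -> : j.+4.+4.+2 %% 3 = 2 by lia. by [].
- rewrite H; have -> : j.+4.+4.+2 %% 3 = 0 by lia. by [].
Qed.

Lemma inI32 x : x < 32 -> x \in I32.
Proof. by rewrite mem_iota. Qed.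
Lemma in9 x : x < 9 -> x \in iota 0 9.
Proof. by rewrite mem_iota. Qed.

Lemma pot a b c q : a < 32 -> b < 32 -> c < 32 -> q < 9 -> ok3 a b c ->
  3 * pc b + phi a b q <= 10 + phi b c (nq q).
Proof.
move=> Ha Hb Hc Hq Hok.
have := C1_ok; rewrite /C1 => /allP /(_ q (in9 Hq)) /allP /(_ a (inI32 Ha))
  /allP /(_ b (inI32 Hb)) /allP /(_ c (inI32 Hc)).
by rewrite Hok.
Qed.

Definition dfc (r : nat -> nat) i :=
  (10 + phi (r i) (r i.+1) (qn i.+1)) - (3 * pc (r i) + phi (pv r i) (r i) (qn i)).

Lemma pv_lt (r : nat -> nat) i : (forall i, r i < 32) -> pv r i < 32.
Proof. by move=> H; case: i. Qed.

Lemma tele (r : nat -> nat) n : (forall i, r i < 32) ->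
  (forall i, i < n -> ok3 (pv r i) (r i) (r i.+1)) ->
  3 * \sum_(i < n) pc (r i) + phi 0 (r 0) 0 + \sum_(i < n) dfc r i
  = 10 * n + phi (pv r n) (r n) (qn n).
Proof.
move=> Hr; elim: n => [|n IH] Hv; first by rewrite !big_ord0 !muln0 add0n addn0.
rewrite !big_ord_recr /=.
have IH' := IH (fun i Hi => Hv i (ltnW Hi)).
have P := pot (pv_lt n Hr) (Hr n) (Hr n.+1) (qn_lt n) (Hv n (ltnSn n)).
rewrite nq_qn in P.
move: IH' P; rewrite /dfc /=.
lia.
Qed.

Definition good h k (r : nat -> nat) :=
  [/\ forall i, r i < 32, forall i, h <= i -> r i = 0,
      forall i, i < h -> ok3 (pv r i) (r i) (r i.+1)
    & \sum_(i < h) pc (r i) = 10 * k + 8].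

Lemma qn_h k : 2 <= k -> qn (3 * k + 2) = 8.
Proof.
move=> hk; rewrite /qn ifF; last by apply/negbTE; rewrite -leqNgt; lia.
have -> : (3 * k + 2) %% 3 = 2 by lia. by [].
Qed.

Lemma pv_h (r : nat -> nat) k : pv r (3 * k + 2) = r (3 * k + 1).
Proof. by rewrite addn2 addn1. Qed.

Lemma start_phi (r : nat -> nat) : r 0 < 32 -> phi 0 (r 0) 0 = 20.
Proof. by move=> H; have := K_start_ok; rewrite /K_start => /allP /(_ _ (inI32 H)) /eqP. Qed.

Lemma end_phi x : x < 32 -> phi x 0 8 <= 24.
Proof. by move=> H; have := K_end_ok; rewrite /K_end => /allP /(_ _ (inI32 H)). Qed.

Lemma bound k (r : nat -> nat) : 2 <= k -> (forall i, r i < 32) -> (forall i, 3 * k + 2 <= i -> r i = 0) ->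
  (forall i, i < 3 * k + 2 -> ok3 (pv r i) (r i) (r i.+1)) ->
  \sum_(i < 3 * k + 2) pc (r i) <= 10 * k + 8.
Proof.
move=> hk Hr Hz Hv.
have T := tele Hr Hv.
rewrite start_phi // qn_h // Hz // pv_h in T.
have E := end_phi (Hr (3 * k + 1)).
lia.
Qed.

Lemma good_tight h k (r : nat -> nat) : 2 <= k -> h = 3 * k + 2 -> good h k r ->
  (forall i, i < h -> tight (pv r i) (r i) (r i.+1) (qn i))
  /\ phi (pv r h) (r h) (qn h) = 24.
Proof.
move=> hk -> [Hr Hz Hv Hs].
have T := tele Hr Hv.
rewrite start_phi // Hs in T.
have E := end_phi (Hr (3 * k + 1)).
move: T; rewrite qn_h // Hz // pv_h => T.
have D0 : \sum_(i < 3 * k + 2) dfc r i = 0 by lia.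
split; last by lia.
move=> i Hi.
have : dfc r (Ordinal Hi) == 0.
  by move: D0 => /eqP; rewrite sum_nat_eq0 => /forallP /(_ (Ordinal Hi)).
rewrite /dfc /= => /eqP D.
have P := pot (pv_lt i Hr) (Hr i) (Hr i.+1) (qn_lt i) (Hv i Hi).
rewrite /tight (Hv i Hi) /= nq_qn; apply/eqP.
rewrite nq_qn in P. lia.
Qed.

Lemma C5_use u v b c q2 a q : (u, v) \in pairs -> (b, c, q2) \in Tt v -> a < 32 -> q < 9 ->
  nq q = q2 -> tight a b c q -> (a, b, q) \in Tt u.
Proof.
move=> Hp Ht Ha Hq Hn Htt.
have := C5_ok; rewrite /C5 => /allP /(_ _ Hp) /allP /(_ _ Ht) /allP /(_ _ (inI32 Ha))
  /allP /(_ _ (in9 Hq)) /=.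
by rewrite Hn eqxx Htt.
Qed.

Lemma good_mem h k (r : nat -> nat) : 2 <= k -> h = 3 * k + 2 -> good h k r ->
  forall m, m <= h -> (pv r (h - m), r (h - m), qn (h - m)) \in Tt (key m).
Proof.
move=> hk Eh G; have [Ht E] := good_tight hk Eh G.
case: G => Hr Hz Hv Hs.
elim => [|m IH] Hm.
  have Q8 : qn h = 8 by rewrite Eh qn_h.
  rewrite subn0 Hz // Q8.
  have E' : phi (pv r h) 0 8 = 24 by rewrite -E Hz // Q8.
  have := K_base_ok; rewrite /K_base => /allP /(_ _ (inI32 (pv_lt h Hr))).
  by rewrite E' eqxx.
have Hi : h - m.+1 < h by lia.
have E1 : (h - m.+1).+1 = h - m by lia.
have M := IH (ltnW Hm); rewrite -E1 /= in M.
exact: (C5_use (key_pair m) M (pv_lt _ Hr) (qn_lt _) (nq_qn _) (Ht _ Hi)).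
Qed.

Lemma good_start h k (r : nat -> nat) : 2 <= k -> h = 3 * k + 2 -> good h k r ->
  r 0 = 23 \/ r 0 = 29.
Proof.
move=> hk Eh G.
have := good_mem hk Eh G (leqnn h); rewrite subnn /= => M.
have := K_starts_ok; rewrite /K_starts => /allP /(_ _ (in9 (key_lt h))) /allP /(_ _ M) /=.
by case/orP => [/eqP ->|/eqP ->]; [left|right].
Qed.

Lemma det_use u v a b q c c' : (u, v) \in pairs -> (a, b, q) \in Tt u -> c < 32 -> c' < 32 ->
  tight a b c q -> (b, c, nq q) \in Tt v -> tight a b c' q -> (b, c', nq q) \in Tt v -> c = c'.
Proof.
move=> Hp Hs Hc Hc' T1 M1 T2 M2.
have := K_det_ok; rewrite /K_det => /allP /(_ _ Hp) /allP /(_ _ Hs) /allP H.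
have := H _ (inI32 Hc); have := H _ (inI32 Hc'); rewrite /= T1 M1 T2 M2 /=.
by move=> /eqP -> /eqP ->.
Qed.

Lemma good_uniq h k (r r' : nat -> nat) : 2 <= k -> h = 3 * k + 2 -> good h k r -> good h k r' ->
  r 0 = r' 0 -> forall i, r i = r' i.
Proof.
move=> hk Eh G G' E0.
have [Ht _] := good_tight hk Eh G; have [Ht' _] := good_tight hk Eh G'.
have Mr := good_mem hk Eh G; have Mr' := good_mem hk Eh G'.
case: G => Hr Hz _ _; case: G' => Hr' Hz' _ _.
suff S : forall i, i < h -> forall j, j <= i -> r j = r' j.
  move=> i; case: (ltnP i h) => Hi; first exact: S Hi i (leqnn i).
  by rewrite Hz // Hz'.
elim => [|i IH] Hi j Hj.
  by move: Hj; rewrite leqn0 => /eqP ->.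
rewrite leq_eqVlt in Hj; case/orP: Hj => [/eqP ->|Hj]; last exact: IH (ltnW Hi) j Hj.
have Hi' : i < h := ltnW Hi.
have Epv : pv r i = pv r' i by case: i IH Hi Hi' => [|i] IH Hi Hi' //=; apply: IH.
have Ei : r i = r' i := IH Hi' i (leqnn i).
have M0 := Mr (h - i) (leq_subr i h); rewrite subKn ?(ltnW Hi') // in M0.
have E1 : (h - i.+1).+1 = h - i by lia.
have M1 := Mr (h - i.+1) (leq_subr _ h); rewrite subKn // /= in M1.
have M1' := Mr' (h - i.+1) (leq_subr _ h); rewrite subKn // /= in M1'.
have KP := key_pair (h - i.+1); rewrite E1 in KP.
rewrite -nq_qn in M1 M1'.
apply: (det_use KP M0 (Hr _) (Hr' _) (Ht i Hi') M1).
- by rewrite Epv Ei; exact: Ht' i Hi'.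
- by rewrite Ei.
Qed.

Fixpoint stx (h i : nat) : nat * nat * nat :=
  match i with
  | 0 => (0, 29, 0)
  | i'.+1 => let s := stx h i' in
             (s.1.2, nextc s.1.1 s.1.2 s.2 (key (h - i'.+1)), nq s.2)
  end.
Definition rw h i := if i < h then (stx h i).1.2 else 0.

Lemma nextc_lt a b q v : nextc a b q v < 32.
Proof.
rewrite /nextc; case E: [seq _ <- _ | _] => [|c s] //=.
have : c \in [seq c <- I32 | tight a b c q && ((b, c, nq q) \in Tt v)] by rewrite E inE eqxx.
by rewrite mem_filter mem_iota => /andP[_ /andP[_ H]].
Qed.

Lemma stx_q h i : (stx h i).2 = qn i.
Proof. by elim: i => [|i IH] //=; rewrite IH nq_qn. Qed.

Lemma stx_lt h i : (stx h i).1.2 < 32.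
Proof. by case: i => [|i] //=; apply: nextc_lt. Qed.

Lemma key_h k : 2 <= k -> key (3 * k + 2) = 8.
Proof.
move=> hk; rewrite /key; case: ifP => H; first lia.
have -> : (3 * k + 2) %% 3 = 2 by lia. by [].
Qed.

Lemma ex_use u v s : (u, v) \in pairs -> s \in Tt u ->
  tight s.1.1 s.1.2 (nextc s.1.1 s.1.2 s.2 v) s.2 && ((s.1.2, nextc s.1.1 s.1.2 s.2 v, nq s.2) \in Tt v).
Proof.
by move=> Hp Hs; have := K_ex_ok; rewrite /K_ex => /allP /(_ _ Hp) /allP /(_ _ Hs).
Qed.

Lemma stx_mem k h : 2 <= k -> h = 3 * k + 2 -> forall i, i <= h -> stx h i \in Tt (key (h - i)).
Proof.
move=> hk Eh; elim => [|i IH] Hi.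
  by rewrite subn0 Eh key_h //; exact: K_init.
have E1 : (h - i.+1).+1 = h - i by lia.
have KP := key_pair (h - i.+1); rewrite E1 in KP.
by have /andP[_ ->] := ex_use KP (IH (ltnW Hi)).
Qed.

Lemma stx_tight k h : 2 <= k -> h = 3 * k + 2 -> forall i, i < h ->
  tight (stx h i).1.1 (stx h i).1.2 (stx h i.+1).1.2 (stx h i).2.
Proof.
move=> hk Eh i Hi.
have E1 : (h - i.+1).+1 = h - i by lia.
have KP := key_pair (h - i.+1); rewrite E1 in KP.
by have /andP[-> _] := ex_use KP (stx_mem hk Eh (ltnW Hi)).
Qed.

Lemma stx_end k h : 2 <= k -> h = 3 * k + 2 ->
  (stx h h).1.2 = 0 /\ phi (stx h h).1.1 0 8 = 24.
Proof.
move=> hk Eh; have := stx_mem hk Eh (leqnn h); rewrite subnn /= => M.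
have := K_T0_ok; rewrite /K_T0 => /allP /(_ _ M) /andP[/andP[/eqP -> _] /eqP ->].
by [].
Qed.

Lemma rw_stx k h i : 2 <= k -> h = 3 * k + 2 -> i <= h -> rw h i = (stx h i).1.2.
Proof.
move=> hk Eh Hi; rewrite /rw; case: ifP => // H.
have -> : i = h by apply/eqP; rewrite eqn_leq Hi leqNgt H.
by rewrite (stx_end hk Eh).1.
Qed.

Lemma pv_rw k h i : 2 <= k -> h = 3 * k + 2 -> i <= h -> pv (rw h) i = (stx h i).1.1.
Proof.
move=> hk Eh; case: i => [|i] Hi //=.
by rewrite (rw_stx hk Eh) // ltnW.
Qed.

Lemma rw_good k h : 2 <= k -> h = 3 * k + 2 -> good h k (rw h).
Proof.
move=> hk Eh.
have Hr : forall i, rw h i < 32 by move=> i; rewrite /rw; case: ifP => // _; apply: stx_lt.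
have Hz : forall i, h <= i -> rw h i = 0 by move=> i Hi; rewrite /rw ltnNge Hi.
have Hv : forall i, i < h -> ok3 (pv (rw h) i) (rw h i) (rw h i.+1).
  move=> i Hi; rewrite (pv_rw hk Eh (ltnW Hi)) (rw_stx hk Eh (ltnW Hi)) (rw_stx hk Eh Hi).
  by have /andP[] := stx_tight hk Eh Hi.
split => //.
have T := tele Hr Hv.
have D0 : \sum_(i < h) dfc (rw h) i = 0.
  apply: big1 => -[i Hi] _ /=.
  have /andP[_ /eqP E] := stx_tight hk Eh Hi.
  rewrite /dfc (pv_rw hk Eh (ltnW Hi)) (rw_stx hk Eh (ltnW Hi)) (rw_stx hk Eh Hi).
  by rewrite stx_q nq_qn in E; rewrite -E subnn.
rewrite D0 start_phi // Hz // (pv_rw hk Eh (leqnn h)) in T.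
move: T; rewrite Eh qn_h // -Eh (stx_end hk Eh).2.
lia.
Qed.


Lemma word_good k (W : word (3 * k + 2) 5) : 2 <= k -> two_full W -> good (3 * k + 2) k (rowc W).
Proof.
move=> hk [H2 Hmax].
have Hv := (inW2E W).1 H2.
have Hb := bound hk (rowc_lt W) (@rowc_out _ W) Hv.
split => //; [exact: rowc_lt | exact: (@rowc_out _ W) |].
have [Hr Hz Hv' Hs] := rw_good hk (erefl (3 * k + 2)).
set Wx := mkw (3 * k + 2) (rw (3 * k + 2)).
have Hx : forall i, rowc Wx i = rw (3 * k + 2) i.
  move=> i; rewrite rowc_mkw //; case: ifP => // H; rewrite Hz //; lia.
have Hpv : forall i, pv (rowc Wx) i = pv (rw (3 * k + 2)) i by case => [|i] //=.
have HxW : inW2 Wx.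
  by apply/(inW2E Wx) => i Hi; rewrite Hpv !Hx; apply: Hv'.
have := Hmax Wx HxW; rewrite !nfilledE.
under eq_bigr => i _ do rewrite Hx.
rewrite Hs => H; apply/eqP; rewrite eqn_leq Hb; exact: H.
Qed.

Lemma okbrev a b c : a < 32 -> b < 32 -> c < 32 -> ok3 (brev a) (brev b) (brev c) = ok3 a b c.
Proof.
move=> Ha Hb Hc; have := K_okbrev_ok; rewrite /K_okbrev => /allP /(_ _ (inI32 Ha))
  /allP /(_ _ (inI32 Hb)) /allP /(_ _ (inI32 Hc)) /eqP.
by [].
Qed.

Lemma pcbrev b : b < 32 -> pc (brev b) = pc b.
Proof.
by move=> Hb; have := K_pcbrev_ok; rewrite /K_pcbrev => /allP /(_ _ (inI32 Hb)) /andP[/eqP ->].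
Qed.

Lemma reflV_two_full h (W : word h 5) : two_full W -> two_full (reflV W).
Proof.
move=> [H2 Hmax].
have Hv := (inW2E W).1 H2.
have Hpv : forall i, pv (rowc (reflV W)) i = brev (pv (rowc W) i).
  by case => [|i] /=; rewrite ?K_brev0 ?rowc_reflV.
have E : nfilled (reflV W) = nfilled W.
  rewrite !nfilledE; apply: eq_bigr => i _; by rewrite rowc_reflV pcbrev // rowc_lt.
split.
  apply/(inW2E (reflV W)) => i Hi; rewrite Hpv !rowc_reflV okbrev ?rowc_lt //.
  - exact: Hv.
  - by case: i Hi => [|i] Hi //=; rewrite rowc_lt.
by move=> V HV; rewrite E; apply: Hmax.
Qed.

Lemma rows_eq h (W V : word h 5) : (forall i, rowc W i = rowc V i) -> W = V.
Proof.
move=> E; apply/matrixP => a b.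
by rewrite -[W a b]cellE -[V a b]cellE -!bit_rowc E.
Qed.

Theorem mainTheorem9 (k : nat) (hk : (2 <= k)%N)
  (W W' : word (3 * k + 2) 5) :
  two_full W -> two_full W' ->
  W' = W \/ W' = reflH W \/ W' = reflV W \/ W' = reflV (reflH W).
Proof.
move=> HW HW'.
have G := word_good hk HW; have G' := word_good hk HW'.
have GR := word_good hk (reflV_two_full HW).
have ER : rowc (reflV W) 0 = brev (rowc W 0) by rewrite rowc_reflV.
have Eh : 3 * k + 2 = 3 * k + 2 by [].
case: (good_start hk Eh G) => E0; case: (good_start hk Eh G') => E0'.
- by left; apply: rows_eq; apply: (good_uniq hk Eh G' G); rewrite E0 E0'.
- right; right; left; apply: rows_eq; apply: (good_uniq hk Eh G' GR).
  by rewrite ER E0 E0' K_brev23.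
- right; right; left; apply: rows_eq; apply: (good_uniq hk Eh G' GR).
  by rewrite ER E0 E0' K_brev29.
- by left; apply: rows_eq; apply: (good_uniq hk Eh G' G); rewrite E0 E0'.
Qed.
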